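(* Consider the finite volume scheme $q_i^{n+1}=q_i^n-\frac{\Delta t}{\Delta x_i}\big(\mathcal F_l(q_i^n,q_{i+1}^n)-\mathcal F_r(q_{i-1}^n,q_i^n)\big)$ described in the context, with pseudo-conservative variable $q=(h,hu,h\sigma_{xx},h\sigma_{zz})$, with relaxation speeds $c_l,c_r$ chosen as in the context, under the CFL condition $\Delta t\,A(q_i^n,q_{i+1}^n)\le\frac12\min(\Delta x_i,\Delta x_{i+1})$ for all $i$. Then: (i) it is consistent with the system of the context for smooth solutions; (ii) it keeps the positivity of $h,\sigma_{xx},\sigma_{zz}$: if all $q_i^n$ have $h>0,\sigma_{xx}>0,\sigma_{zz}>0$, so do all $q_i^{n+1}$; (iii) it is conservative in the variables $h$ and $hu$ (the first two components of $\mathcal F_l(q_l,q_r)$ and $\mathcal F_r(q_l,q_r)$ coincide); (iv) it satisfies the discrete energy inequality: there exists a numerical energy flux $\mathcal G(q_l,q_r)$ with $\mathcal G(q,q)=G(q)$ such that $E(q_i^{n+1})-E(q_i^n)+\frac{\Delta t}{\Delta x_i}\big(\mathcal G(q_i^n,q_{i+1}^n)-\mathcal G(q_{i-1}^n,q_i^n)\big)\le0$ for all $i$; (v) it satisfies the maximum principle on $s_{xx}$ and the minimum principle on $s_{zz}$: if for a constant $k>0$ one has $s_{xx}(q_i^n)\le k$ for all $i$ (resp. $s_{zz}(q_i^n)\ge k$ for all $i$), then $s_{xx}(q_i^{n+1})\le k$ (resp. $s_{zz}(q_i^{n+1})\ge k$) for all $i$; (vi) steady contact discontinuities where $u=0$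 and $P$ is constant are exactly resolved: if $u_i^n=0$ for all $i$ and $P(q_i^n)$ does not depend on $i$, then $q_i^{n+1}=q_i^n$ for all $i$; (vii) data with bounded propagation speeds give finite numerical propagation speed: there is an absolute constant $C$ such that $A(q_l,q_r)\le C(|u_l|+|u_r|+a_l+a_r)$ for all states $q_l,q_r$; (viii) the numerical viscosity is sharp: as $q_l,q_r$ tend to a common state $q$, the speeds $\Sigma_1,\Sigma_2,\Sigma_3$ tend respectively to the exact characteristic speeds $u-\sqrt{\partial_hP|_{\boldsymbol s}},\ u,\ u+\sqrt{\partial_hP|_{\boldsymbol s}}$ evaluated at $q$.
   Context: We consider the one-dimensional system for $h\ge0$, velocity $u$, and $\sigma_{xx},\sigma_{zz}>0$: $\partial_t h+\partial_x(hu)=0$, $\partial_t(hu)+\partial_x(hu^2+P)=0$, $\partial_t(h\sigma_{xx})+\partial_x(h\sigma_{xx}u)-2h\sigma_{xx}\partial_xu=0$, $\partial_t(h\sigma_{zz})+\partial_x(h\sigma_{zz}u)+2h\sigma_{zz}\partial_xu=0$, with $P=g\frac{h^2}{2}+\frac{\eta_p}{2\lambda}h(\sigma_{zz}-\sigma_{xx})$, constants $g,\eta_p,\lambda>0$. States $q=(h,hu,h\sigma_{xx},h\sigma_{zz})$ with $h>0,\sigma_{xx}>0,\sigma_{zz}>0$. Set $\boldsymbol s=(s_{xx},s_{zz})=(\sigma_{xx}^{-1/2}/h,\ \sigma_{zz}^{1/2}/h)$; then $\partial_hP|_{\boldsymbol s}=gh+\frac{\eta_p}{2\lambda}(3\sigma_{zz}+\sigma_{xx})$.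 Energy $E(q)=h\frac{u^2}{2}+g\frac{h^2}{2}+\frac{\eta_p}{4\lambda}h(\sigma_{xx}+\sigma_{zz}-\ln(\sigma_{xx}\sigma_{zz})-2)$, energy flux $G(q)=(E+P)u$. Relaxation speeds: for states $q_l,q_r$, $P_l=P(q_l)$, $P_r=P(q_r)$, $a_l=\sqrt{\partial_hP|_{\boldsymbol s}(q_l)}$, $a_r=\sqrt{\partial_hP|_{\boldsymbol s}(q_r)}$, $\frac{c_l}{h_l}=a_l+2\big(\max(0,u_l-u_r)+\frac{\max(0,P_r-P_l)}{h_la_l+h_ra_r}\big)$, $\frac{c_r}{h_r}=a_r+2\big(\max(0,u_l-u_r)+\frac{\max(0,P_l-P_r)}{h_la_l+h_ra_r}\big)$. Riemann solver: $\pi_l=P_l$, $\pi_r=P_r$, $u^*=\frac{c_lu_l+c_ru_r+\pi_l-\pi_r}{c_l+c_r}$, $\pi^*=\frac{c_r\pi_l+c_l\pi_r-c_lc_r(u_r-u_l)}{c_l+c_r}$, $\frac1{h_l^*}=\frac1{h_l}+\frac{c_r(u_r-u_l)+\pi_l-\pi_r}{c_l(c_l+c_r)}$, $\frac1{h_r^*}=\frac1{h_r}+\frac{c_l(u_r-u_l)+\pi_r-\pi_l}{c_r(c_l+c_r)}$, $\sigma_{xx,l}^*=\sigma_{xx,l}(h_l/h_l^* )^2$, $\sigma_{xx,r}^*=\sigma_{xx,r}(h_r/h_r^* )^2$, $\sigma_{zz,l}^*=\sigma_{zz,l}(h_l^*/h_l)^2$, $\sigma_{zz,r}^*=\sigma_{zz,r}(h_r^*/h_r)^2$;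 $q_l^*=(h_l^*,h_l^*u^*,h_l^*\sigma_{xx,l}^*,h_l^*\sigma_{zz,l}^* )$, $q_r^*$ similarly; speeds $\Sigma_1=u_l-c_l/h_l$, $\Sigma_2=u^*$, $\Sigma_3=u_r+c_r/h_r$. The self-similar approximate solution equals $q_l$ (with $\pi=\pi_l$) for $\xi<\Sigma_1$, $q_l^*$ (with $\pi=\pi^*$) on $(\Sigma_1,\Sigma_2)$, $q_r^*$ (with $\pi=\pi^*$) on $(\Sigma_2,\Sigma_3)$, $q_r$ (with $\pi=\pi_r$) for $\xi>\Sigma_3$. Numerical fluxes: $\mathcal F_l=(\mathcal F^h,\mathcal F^{hu},\mathcal F_l^{h\sigma_{xx}},\mathcal F_l^{h\sigma_{zz}})$, $\mathcal F_r=(\mathcal F^h,\mathcal F^{hu},\mathcal F_r^{h\sigma_{xx}},\mathcal F_r^{h\sigma_{zz}})$, where $\mathcal F^h=hu$ and $\mathcal F^{hu}=hu^2+\pi$ evaluated in the self-similar solution at $\xi=0$; and, for $w=h\sigma_{xx}$ (resp. $w=h\sigma_{zz}$), $\mathcal F_l^{w}=(wu)_l+\min(0,\Sigma_1)(w_l^*-w_l)+\min(0,\Sigma_2)(w_r^*-w_l^* )+\min(0,\Sigma_3)(w_r-w_r^* )$ and $\mathcal F_r^{w}=(wu)_r-\max(0,\Sigma_1)(w_l^*-w_l)-\max(0,\Sigma_2)(w_r^*-w_l^* )-\max(0,\Sigma_3)(w_r-w_r^* )$. Mesh: cells $(x_{i-1/2},x_{i+1/2})$, $i\in\mathbb Z$,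 $\Delta x_i=x_{i+1/2}-x_{i-1/2}$, time step $\Delta t$; $A(q_l,q_r)=\max(|\Sigma_1|,|\Sigma_2|,|\Sigma_3|)$. *)

(* Defs.v *)
From Stdlib Require Import Reals Lra ZArith.
Open Scope R_scope.

(* A state / 4-vector: components (h, hu, h*sigma_xx, h*sigma_zz). *)
Record st := St { sh : R; shu : R; shxx : R; shzz : R }.

Definition stadd (p q : st) : st :=
  St (sh p + sh q) (shu p + shu q) (shxx p + shxx q) (shzz p + shzz q).
Definition stsub (p q : st) : st :=
  St (sh p - sh q) (shu p - shu q) (shxx p - shxx q) (shzz p - shzz q).
Definition stscal (c : R) (p : st) : st :=
  St (c * sh p) (c * shu p) (c * shxx p) (c * shzz p).
Definition stnorm (p : st) : R :=
  Rmax (Rabs (sh p)) (Rmax (Rabs (shu p)) (Rmax (Rabs (shxx p)) (Rabs (shzz p)))).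
Definition stdist (p q : st) : R := stnorm (stsub p q).

Definition adm (q : st) : Prop := 0 < sh q /\ 0 < shxx q / sh q /\ 0 < shzz q / sh q.

Definition vel (q : st) : R := shu q / sh q.
Definition sigxx (q : st) : R := shxx q / sh q.
Definition sigzz (q : st) : R := shzz q / sh q.

Definition sxx (q : st) : R := / (sqrt (sigxx q) * sh q).
Definition szz (q : st) : R := sqrt (sigzz q) / sh q.

Section Model.
Variables g eta lam : R.

Definition Pr (q : st) : R :=
  g * sh q ^ 2 / 2 + eta / (2 * lam) * sh q * (sigzz q - sigxx q).
(* partial_h P at fixed s *)
Definition dPs (q : st) : R := g * sh q + eta / (2 * lam) * (3 * sigzz q + sigxx q).
Definition asp (q : st) : R := sqrt (dPs q).

Definition Energy (q : st) : R :=
  sh q * vel q ^ 2 / 2 + g * sh q ^ 2 / 2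
  + eta / (4 * lam) * sh q * (sigxx q + sigzz q - ln (sigxx q * sigzz q) - 2).
Definition Gflux (q : st) : R := (Energy q + Pr q) * vel q.

(* physical (conservative part) flux and nonconservative matrix B(q):
   the system reads  d_t q + d_x F(q) + B(q) d_x q = 0 with
   B(q) d_x q = (0, 0, -2 h sigma_xx d_x u, 2 h sigma_zz d_x u),
   h d_x u = d_x(hu) - u d_x h. *)
Definition Fphys (q : st) : st :=
  St (shu q) (shu q * vel q + Pr q) (shxx q * vel q) (shzz q * vel q).
Definition Bmat (q v : st) : st :=
  St 0 0 (-2 * sigxx q * (shu v - vel q * sh v)) (2 * sigzz q * (shu v - vel q * sh v)).

Definition cL (ql qr : st) : R :=
  sh ql * (asp ql + 2 * (Rmax 0 (vel ql - vel qr)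
     + Rmax 0 (Pr qr - Pr ql) / (sh ql * asp ql + sh qr * asp qr))).
Definition cR (ql qr : st) : R :=
  sh qr * (asp qr + 2 * (Rmax 0 (vel ql - vel qr)
     + Rmax 0 (Pr ql - Pr qr) / (sh ql * asp ql + sh qr * asp qr))).

Definition ustar (ql qr : st) : R :=
  (cL ql qr * vel ql + cR ql qr * vel qr + Pr ql - Pr qr) / (cL ql qr + cR ql qr).
Definition pistar (ql qr : st) : R :=
  (cR ql qr * Pr ql + cL ql qr * Pr qr - cL ql qr * cR ql qr * (vel qr - vel ql))
  / (cL ql qr + cR ql qr).
Definition hLstar (ql qr : st) : R :=
  / (/ sh ql + (cR ql qr * (vel qr - vel ql) + Pr ql - Pr qr)
               / (cL ql qr * (cL ql qr + cR ql qr))).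
Definition hRstar (ql qr : st) : R :=
  / (/ sh qr + (cL ql qr * (vel qr - vel ql) + Pr qr - Pr ql)
               / (cR ql qr * (cL ql qr + cR ql qr))).
Definition qLstar (ql qr : st) : st :=
  let hs := hLstar ql qr in
  St hs (hs * ustar ql qr)
     (hs * (sigxx ql * (sh ql / hs) ^ 2)) (hs * (sigzz ql * (hs / sh ql) ^ 2)).
Definition qRstar (ql qr : st) : st :=
  let hs := hRstar ql qr in
  St hs (hs * ustar ql qr)
     (hs * (sigxx qr * (sh qr / hs) ^ 2)) (hs * (sigzz qr * (hs / sh qr) ^ 2)).

Definition Sig1 (ql qr : st) : R := vel ql - cL ql qr / sh ql.
Definition Sig2 (ql qr : st) : R := ustar ql qr.
Definition Sig3 (ql qr : st) : R := vel qr + cR ql qr / sh qr.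

Definition Aspeed (ql qr : st) : R :=
  Rmax (Rabs (Sig1 ql qr)) (Rmax (Rabs (Sig2 ql qr)) (Rabs (Sig3 ql qr))).

(* value (state, pi) of the self-similar solution at xi = 0
   (at xi = Sigma_k exactly, the state on the right of the wave is taken;
   h u and h u^2 + pi are continuous across the waves, so this is immaterial) *)
Definition at0_state (ql qr : st) : st :=
  if Rlt_dec 0 (Sig1 ql qr) then ql
  else if Rlt_dec 0 (Sig2 ql qr) then qLstar ql qr
  else if Rlt_dec 0 (Sig3 ql qr) then qRstar ql qr
  else qr.
Definition at0_pi (ql qr : st) : R :=
  if Rlt_dec 0 (Sig1 ql qr) then Pr ql
  else if Rlt_dec 0 (Sig3 ql qr) then pistar ql qr
  else Pr qr.

Definition Fh (ql qr : st) : R := shu (at0_state ql qr).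
Definition Fhu (ql qr : st) : R :=
  shu (at0_state ql qr) * vel (at0_state ql qr) + at0_pi ql qr.

Definition FwL (w : st -> R) (ql qr : st) : R :=
  w ql * vel ql
  + Rmin 0 (Sig1 ql qr) * (w (qLstar ql qr) - w ql)
  + Rmin 0 (Sig2 ql qr) * (w (qRstar ql qr) - w (qLstar ql qr))
  + Rmin 0 (Sig3 ql qr) * (w qr - w (qRstar ql qr)).
Definition FwR (w : st -> R) (ql qr : st) : R :=
  w qr * vel qr
  - Rmax 0 (Sig1 ql qr) * (w (qLstar ql qr) - w ql)
  - Rmax 0 (Sig2 ql qr) * (w (qRstar ql qr) - w (qLstar ql qr))
  - Rmax 0 (Sig3 ql qr) * (w qr - w (qRstar ql qr)).

Definition FluxL (ql qr : st) : st :=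
  St (Fh ql qr) (Fhu ql qr) (FwL shxx ql qr) (FwL shzz ql qr).
Definition FluxR (ql qr : st) : st :=
  St (Fh ql qr) (Fhu ql qr) (FwR shxx ql qr) (FwR shzz ql qr).

Definition scheme (dt : R) (dx : Z -> R) (qn : Z -> st) (i : Z) : st :=
  stsub (qn i) (stscal (dt / dx i)
     (stsub (FluxL (qn i) (qn (i + 1)%Z)) (FluxR (qn (i - 1)%Z) (qn i)))).

Definition CFL (dt : R) (dx : Z -> R) (qn : Z -> st) : Prop :=
  forall i : Z, dt * Aspeed (qn i) (qn (i + 1)%Z) <= / 2 * Rmin (dx i) (dx (i + 1)%Z).

(* Consistency of the pair of numerical fluxes with the nonconservative
   system d_t q + d_x F(q) + B(q) d_x q = 0 (Bouchut's definition):
   F_l(q,q) = F_r(q,q) = F(q) and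
   F_r(q_l,q_r) - F_l(q_l,q_r) = - B(q)(q_r - q_l) + o(q_r - q_l)
   as q_l, q_r -> q. *)
Definition consistent : Prop :=
  forall q, adm q ->
    FluxL q q = Fphys q /\ FluxR q q = Fphys q /\
    forall eps, 0 < eps -> exists delta, 0 < delta /\
      forall ql qr, adm ql -> adm qr -> stdist ql q < delta -> stdist qr q < delta ->
        stnorm (stadd (stsub (FluxR ql qr) (FluxL ql qr)) (Bmat q (stsub qr ql)))
          <= eps * stdist qr ql.

End Model.

(* Main.v *)
Require Import Defs.
From Stdlib Require Import Reals Lra ZArith Psatz List.
Open Scope R_scope.

Definition Ef g k2 h u sx sz := h*u^2/2 + g*h^2/2 + k2*h*(sx+sz - ln(sx*sz) - 2).

Lemma wave_D g k2 h u sx sz hs us c :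
  0 < h -> 0 < hs -> 0 < c -> 0 < sx -> 0 < sz -> / hs = / h + (us - u) / c ->
  let S := u - c / h in let P := g*h^2/2 + 2*k2*h*(sz - sx) in
  let pis := P - c*(us - u) in let t := h / hs in
  let sxs := sx*(h/hs)^2 in let szs := sz*(hs/h)^2 in
  S*(Ef g k2 hs us sxs szs - Ef g k2 h u sx sz) - ((Ef g k2 hs us sxs szs + pis)*us - (Ef g k2 h u sx sz + P)*u)
  = c*(t-1)^2/2*(c^2/h^2 - g*h/t - 2*k2*sx - 2*k2*sz*(1+2*t)/t^2).
Proof.
  intros Hh Hhs Hc Hx Hz Hrel S P pis t sxs szs.
  assert (Eln : ln (sxs * szs) = ln (sx * sz)).
  { f_equal. unfold sxs, szs. field. split; lra. }
  unfold Ef. rewrite Eln. set (L := ln (sx*sz)).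
  assert (Eus : us = u + c * (/hs - /h)).
  { rewrite Hrel. field. lra. }
  subst S P pis t sxs szs. rewrite Eus. field. repeat split; lra.
Qed.

Lemma wave_ineq G X Z y t :
  0 < G -> 0 < X -> 0 < Z -> 0 <= y -> 0 < t -> (1+y)/(1+2*y) <= t ->
  G/t + X + Z*(1+2*t)/t^2 <= (G + 3*Z + X)*(1+2*y)^2.
Proof.
  intros HG HX HZ Hy Ht Hb.
  assert (Hs : 1 + y <= t * (1 + 2*y)).
  { apply (Rmult_le_compat_r (1+2*y)) in Hb; [|lra].
    unfold Rdiv in Hb. rewrite Rmult_assoc, Rinv_l in Hb by lra. lra. }
  destruct (Rle_lt_dec 1 t) as [H1|H1].
  - assert (G/t <= G). { unfold Rdiv. apply (Rmult_le_reg_r t); [lra|].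
      rewrite Rmult_assoc, Rinv_l by lra. nra. }
    assert (Z*(1+2*t)/t^2 <= 3*Z). { apply (Rmult_le_reg_r (t^2)); [nra|].
      unfold Rdiv. rewrite Rmult_assoc, Rinv_l by nra. assert (0 <= (3*t+1)*(t-1)) by nra. nra. }
    assert (1 <= (1+2*y)^2) by nra. nra.
  -
    set (s := t*(1+2*y)) in *.
    assert (K : 1 + 2*t <= 3 * t^2 * (1+2*y)^2).
    { replace (3 * t^2 * (1+2*y)^2) with (3*s^2) by (unfold s; ring).
      assert (t <= s) by (unfold s; nra). nra. }
    assert (A1 : G/t <= G*(1+2*t)/(3*t^2)).
    { unfold Rdiv. apply (Rmult_le_reg_r (3*t^2)); [nra|].
      rewrite (Rmult_assoc (G*(1+2*t))), Rinv_l by nra.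
      replace (G * / t * (3 * t ^ 2)) with (3*G*t) by (field; lra). nra. }
    assert (A2 : X <= X*(1+2*t)/(3*t^2)).
    { unfold Rdiv. apply (Rmult_le_reg_r (3*t^2)); [nra|].
      rewrite (Rmult_assoc (X*(1+2*t))), Rinv_l by nra. assert (0 <= (1-t)*(1+3*t)) by nra. nra. }
    assert (A3 : Z*(1+2*t)/t^2 = 3*Z*(1+2*t)/(3*t^2)) by (field; lra).
    assert (A4 : (G + 3*Z + X)*(1+2*t)/(3*t^2) <= (G + 3*Z + X)*(1+2*y)^2).
    { unfold Rdiv. apply (Rmult_le_reg_r (3*t^2)); [nra|].
      rewrite (Rmult_assoc ((G + 3*Z + X)*(1+2*t))), Rinv_l by nra. nra. }
    assert (E : G*(1+2*t)/(3*t^2) + X*(1+2*t)/(3*t^2) + 3*Z*(1+2*t)/(3*t^2)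
              = (G + 3*Z + X)*(1+2*t)/(3*t^2)) by (field; lra).
    lra.
Qed.

Lemma rh_l h u hs us c : 0 < h -> 0 < hs -> 0 < c -> / hs = / h + (us - u) / c ->
  hs*us - h*u = (u - c/h)*(hs - h) /\
  (hs*us*us + (- c*(us-u))) - (h*u*u) = (u - c/h)*(hs*us - h*u).
Proof. intros Hh Hhs Hc Hrel.
  assert (Eus : us = u + c * (/hs - /h)) by (rewrite Hrel; field; lra).
  rewrite Eus. split; field; lra. Qed.
Lemma rh_r h u hs us c : 0 < h -> 0 < hs -> 0 < c -> / hs = / h + (u - us) / c ->
  h*u - hs*us = (u + c/h)*(h - hs) /\
  (h*u*u) - (hs*us*us + c*(us-u)) = (u + c/h)*(h*u - hs*us).
Proof. intros Hh Hhs Hc Hrel.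
  assert (Eus : us = u - c * (/hs - /h)) by (rewrite Hrel; field; lra).
  rewrite Eus. split; field; lra. Qed.

Lemma Qx_l X h u hs us c : 0 < h -> 0 < hs -> 0 < c -> / hs = / h + (us - u) / c ->
  (X*h/hs)*us - X*u - (u - c/h)*(X*h/hs - X) = X*(h/hs + 1)*(us - u).
Proof. intros Hh Hhs Hc Hrel.
  assert (Eus : us = u + c * (/hs - /h)) by (rewrite Hrel; field; lra).
  rewrite Eus. field. lra. Qed.
Lemma Qx_r X h u hs us c : 0 < h -> 0 < hs -> 0 < c -> / hs = / h + (u - us) / c ->
  X*u - (X*h/hs)*us - (u + c/h)*(X - X*h/hs) = X*(h/hs + 1)*(u - us).
Proof. intros Hh Hhs Hc Hrel.
  assert (Eus : us = u - c * (/hs - /h)) by (rewrite Hrel; field; lra).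
  rewrite Eus. field. lra. Qed.
Lemma Qz_l Z h u hs us c : 0 < h -> 0 < hs -> 0 < c -> / hs = / h + (us - u) / c ->
  (Z*(hs/h)^3)*us - Z*u - (u - c/h)*(Z*(hs/h)^3 - Z) = - (Z*(h/hs + 1)/(h/hs)^2)*(us - u).
Proof. intros Hh Hhs Hc Hrel.
  assert (Eus : us = u + c * (/hs - /h)) by (rewrite Hrel; field; lra).
  rewrite Eus. field. lra. Qed.
Lemma Qz_r Z h u hs us c : 0 < h -> 0 < hs -> 0 < c -> / hs = / h + (u - us) / c ->
  Z*u - (Z*(hs/h)^3)*us - (u + c/h)*(Z - Z*(hs/h)^3) = - (Z*(h/hs + 1)/(h/hs)^2)*(u - us).
Proof. intros Hh Hhs Hc Hrel.
  assert (Eus : us = u - c * (/hs - /h)) by (rewrite Hrel; field; lra).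
  rewrite Eus. field. lra. Qed.

Lemma adm_h q : adm q -> 0 < sh q.  Proof. intros [H _]; exact H. Qed.
Lemma adm_sx q : adm q -> 0 < sigxx q. Proof. intros [_ [H _]]; exact H. Qed.
Lemma adm_sz q : adm q -> 0 < sigzz q. Proof. intros [_ [_ H]]; exact H. Qed.
Lemma adm_X q : adm q -> 0 < shxx q.
Proof. intros [H1 [H2 _]]. unfold sigxx in *.
  replace (shxx q) with (shxx q / sh q * sh q) by (field; lra). nra. Qed.
Lemma adm_Z q : adm q -> 0 < shzz q.
Proof. intros [H1 [_ H2]].
  replace (shzz q) with (shzz q / sh q * sh q) by (field; lra). nra. Qed.

Lemma kpos eta lam : 0 < eta -> 0 < lam -> 0 < eta / (2*lam).
Proof. intros; unfold Rdiv; apply Rmult_lt_0_compat; [lra|]. apply Rinv_0_lt_compat; lra. Qed.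

Lemma dPs_pos g eta lam q : 0 < g -> 0 < eta -> 0 < lam -> adm q -> 0 < dPs g eta lam q.
Proof. intros Hg He Hl Hq. unfold dPs.
  pose proof (kpos eta lam He Hl). pose proof (adm_h q Hq). pose proof (adm_sx q Hq).
  pose proof (adm_sz q Hq). set (k := eta/(2*lam)) in *.
  assert (0 < g * sh q) by (apply Rmult_lt_0_compat; lra).
  assert (0 < k * (3 * sigzz q + sigxx q)) by (apply Rmult_lt_0_compat; lra). lra. Qed.

Lemma asp_pos g eta lam q : 0 < g -> 0 < eta -> 0 < lam -> adm q -> 0 < asp g eta lam q.
Proof. intros. unfold asp. apply sqrt_lt_R0. apply dPs_pos; auto. Qed.

Lemma asp_sq g eta lam q : 0 < g -> 0 < eta -> 0 < lam -> adm q ->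
  asp g eta lam q * asp g eta lam q = dPs g eta lam q.
Proof. intros. unfold asp. apply sqrt_sqrt. left; apply dPs_pos; auto. Qed.

Lemma Pr_le g eta lam q : 0 < g -> 0 < eta -> 0 < lam -> adm q ->
  Pr g eta lam q <= sh q * dPs g eta lam q /\ - Pr g eta lam q <= sh q * dPs g eta lam q.
Proof. intros Hg He Hl Hq. unfold Pr, dPs.
  pose proof (kpos eta lam He Hl). pose proof (adm_h q Hq). pose proof (adm_sx q Hq).
  pose proof (adm_sz q Hq). set (k := eta/(2*lam)) in *.
  assert (0 < k * sh q * sigzz q) by (apply Rmult_lt_0_compat; [apply Rmult_lt_0_compat|]; lra).
  assert (0 < k * sh q * sigxx q) by (apply Rmult_lt_0_compat; [apply Rmult_lt_0_compat|]; lra).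
  assert (0 < g * sh q * sh q) by (apply Rmult_lt_0_compat; [apply Rmult_lt_0_compat|]; lra).
  split; nra. Qed.

Definition DD g eta lam ql qr := sh ql * asp g eta lam ql + sh qr * asp g eta lam qr.
Definition dd ql qr := Rmax 0 (vel ql - vel qr).
Definition pL g eta lam ql qr := Rmax 0 (Pr g eta lam qr - Pr g eta lam ql) / DD g eta lam ql qr.
Definition pR g eta lam ql qr := Rmax 0 (Pr g eta lam ql - Pr g eta lam qr) / DD g eta lam ql qr.

Lemma cL_eq g eta lam ql qr : cL g eta lam ql qr =
   sh ql * (asp g eta lam ql + 2 * (dd ql qr + pL g eta lam ql qr)).
Proof. reflexivity. Qed.
Lemma cR_eq g eta lam ql qr : cR g eta lam ql qr =
   sh qr * (asp g eta lam qr + 2 * (dd ql qr + pR g eta lam ql qr)).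
Proof. reflexivity. Qed.

Section Pair.
Variables (g eta lam : R) (ql qr : st).
Hypotheses (Hg : 0 < g) (He : 0 < eta) (Hl : 0 < lam) (Hql : adm ql) (Hqr : adm qr).

Lemma DD_pos : 0 < DD g eta lam ql qr.
Proof. unfold DD. pose proof (asp_pos g eta lam ql Hg He Hl Hql).
  pose proof (asp_pos g eta lam qr Hg He Hl Hqr). pose proof (adm_h _ Hql). pose proof (adm_h _ Hqr). nra. Qed.

Let hl := sh ql. Let hr := sh qr.
Let al := asp g eta lam ql. Let ar := asp g eta lam qr.

Lemma al_pos : 0 < asp g eta lam ql. Proof. apply asp_pos; auto. Qed.
Lemma ar_pos : 0 < asp g eta lam qr. Proof. apply asp_pos; auto. Qed.

Lemma dd_ge : 0 <= dd ql qr. Proof. apply Rmax_l. Qed.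
Lemma pL_ge : 0 <= pL g eta lam ql qr.
Proof. unfold pL. apply Rmult_le_pos; [apply Rmax_l|]. left; apply Rinv_0_lt_compat, DD_pos. Qed.
Lemma pR_ge : 0 <= pR g eta lam ql qr.
Proof. unfold pR. apply Rmult_le_pos; [apply Rmax_l|]. left; apply Rinv_0_lt_compat, DD_pos. Qed.

Lemma cL_ge : sh ql * asp g eta lam ql <= cL g eta lam ql qr.
Proof. rewrite cL_eq. pose proof dd_ge. pose proof pL_ge. pose proof (adm_h _ Hql). nra. Qed.
Lemma cR_ge : sh qr * asp g eta lam qr <= cR g eta lam ql qr.
Proof. rewrite cR_eq. pose proof dd_ge. pose proof pR_ge. pose proof (adm_h _ Hqr). nra. Qed.
Lemma cL_pos : 0 < cL g eta lam ql qr.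
Proof. pose proof cL_ge. pose proof al_pos. pose proof (adm_h _ Hql). nra. Qed.
Lemma cR_pos : 0 < cR g eta lam ql qr.
Proof. pose proof cR_ge. pose proof ar_pos. pose proof (adm_h _ Hqr). nra. Qed.
Lemma cLR_ge : DD g eta lam ql qr <= cL g eta lam ql qr + cR g eta lam ql qr.
Proof. unfold DD. pose proof cL_ge; pose proof cR_ge; lra. Qed.

Lemma ustar_l : ustar g eta lam ql qr - vel ql =
  (cR g eta lam ql qr * (vel qr - vel ql) + Pr g eta lam ql - Pr g eta lam qr)
  / (cL g eta lam ql qr + cR g eta lam ql qr).
Proof. unfold ustar. pose proof cL_pos; pose proof cR_pos; pose proof (adm_h _ Hql); pose proof (adm_h _ Hqr). field; repeat split; lra. Qed.
Lemma ustar_r : vel qr - ustar g eta lam ql qr =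
  (cL g eta lam ql qr * (vel qr - vel ql) + Pr g eta lam qr - Pr g eta lam ql)
  / (cL g eta lam ql qr + cR g eta lam ql qr).
Proof. unfold ustar. pose proof cL_pos; pose proof cR_pos; pose proof (adm_h _ Hql); pose proof (adm_h _ Hqr). field; repeat split; lra. Qed.

Lemma invhL : / hLstar g eta lam ql qr = / sh ql + (ustar g eta lam ql qr - vel ql) / cL g eta lam ql qr.
Proof. unfold hLstar. rewrite Rinv_inv. rewrite ustar_l.
  pose proof cL_pos; pose proof cR_pos; pose proof (adm_h _ Hql); pose proof (adm_h _ Hqr). field; repeat split; lra. Qed.
Lemma invhR : / hRstar g eta lam ql qr = / sh qr + (vel qr - ustar g eta lam ql qr) / cR g eta lam ql qr.
Proof. unfold hRstar. rewrite Rinv_inv. rewrite ustar_r.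
  pose proof cL_pos; pose proof cR_pos; pose proof (adm_h _ Hql); pose proof (adm_h _ Hqr). field; repeat split; lra. Qed.

Lemma pistar_l : pistar g eta lam ql qr = Pr g eta lam ql - cL g eta lam ql qr * (ustar g eta lam ql qr - vel ql).
Proof. rewrite ustar_l. unfold pistar. pose proof cL_pos; pose proof cR_pos; pose proof (adm_h _ Hql); pose proof (adm_h _ Hqr). field; repeat split; lra. Qed.
Lemma pistar_r : pistar g eta lam ql qr = Pr g eta lam qr + cR g eta lam ql qr * (ustar g eta lam ql qr - vel qr).
Proof. replace (ustar g eta lam ql qr - vel qr) with (-(vel qr - ustar g eta lam ql qr)) by ring.
  rewrite ustar_r. unfold pistar. pose proof cL_pos; pose proof cR_pos; pose proof (adm_h _ Hql); pose proof (adm_h _ Hqr). field; repeat split; lra. Qed.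

Lemma ul_bound : vel ql - ustar g eta lam ql qr <= dd ql qr + pL g eta lam ql qr.
Proof.
  replace (vel ql - ustar g eta lam ql qr) with (-(ustar g eta lam ql qr - vel ql)) by ring.
  rewrite ustar_l. pose proof cL_pos; pose proof cR_pos; pose proof cLR_ge; pose proof DD_pos.
  pose proof dd_ge; pose proof pL_ge.
  assert (Hd1 : vel ql - vel qr <= dd ql qr) by apply Rmax_r.
  assert (Hd2 : Pr g eta lam qr - Pr g eta lam ql <= pL g eta lam ql qr * DD g eta lam ql qr).
  { unfold pL. unfold Rdiv. rewrite Rmult_assoc, Rinv_l by lra. rewrite Rmult_1_r. apply Rmax_r. }
  set (c1 := cL g eta lam ql qr) in *. set (c2 := cR g eta lam ql qr) in *.
  apply (Rmult_le_reg_r (c1 + c2)); [lra|].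
  unfold Rdiv. rewrite Ropp_mult_distr_l_reverse, Rmult_assoc, Rinv_l by lra. nra. Qed.

Lemma ur_bound : ustar g eta lam ql qr - vel qr <= dd ql qr + pR g eta lam ql qr.
Proof.
  replace (ustar g eta lam ql qr - vel qr) with (-(vel qr - ustar g eta lam ql qr)) by ring.
  rewrite ustar_r. pose proof cL_pos; pose proof cR_pos; pose proof cLR_ge; pose proof DD_pos.
  pose proof dd_ge; pose proof pR_ge.
  assert (Hd1 : vel ql - vel qr <= dd ql qr) by apply Rmax_r.
  assert (Hd2 : Pr g eta lam ql - Pr g eta lam qr <= pR g eta lam ql qr * DD g eta lam ql qr).
  { unfold pR. unfold Rdiv. rewrite Rmult_assoc, Rinv_l by lra. rewrite Rmult_1_r. apply Rmax_r. }
  set (c1 := cL g eta lam ql qr) in *. set (c2 := cR g eta lam ql qr) in *.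
  apply (Rmult_le_reg_r (c1 + c2)); [lra|].
  unfold Rdiv. rewrite Ropp_mult_distr_l_reverse, Rmult_assoc, Rinv_l by lra. nra. Qed.

Definition yL := (dd ql qr + pL g eta lam ql qr) / asp g eta lam ql.
Definition yR := (dd ql qr + pR g eta lam ql qr) / asp g eta lam qr.

Lemma yL_ge : 0 <= yL.
Proof. unfold yL. pose proof dd_ge; pose proof pL_ge; pose proof al_pos.
  apply Rmult_le_pos; [lra|left; apply Rinv_0_lt_compat; lra]. Qed.
Lemma yR_ge : 0 <= yR.
Proof. unfold yR. pose proof dd_ge; pose proof pR_ge; pose proof ar_pos.
  apply Rmult_le_pos; [lra|left; apply Rinv_0_lt_compat; lra]. Qed.

Lemma cL_y : cL g eta lam ql qr = sh ql * asp g eta lam ql * (1 + 2 * yL).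
Proof. rewrite cL_eq. unfold yL. pose proof al_pos. field. lra. Qed.
Lemma cR_y : cR g eta lam ql qr = sh qr * asp g eta lam qr * (1 + 2 * yR).
Proof. rewrite cR_eq. unfold yR. pose proof ar_pos. field. lra. Qed.

Lemma tL_eq : sh ql * / hLstar g eta lam ql qr = 1 + sh ql * (ustar g eta lam ql qr - vel ql) / cL g eta lam ql qr.
Proof. rewrite invhL. pose proof cL_pos; pose proof (adm_h _ Hql). field. lra. Qed.
Lemma tR_eq : sh qr * / hRstar g eta lam ql qr = 1 + sh qr * (vel qr - ustar g eta lam ql qr) / cR g eta lam ql qr.
Proof. rewrite invhR. pose proof cR_pos; pose proof (adm_h _ Hqr). field. lra. Qed.

Lemma tL_bound : (1 + yL) / (1 + 2 * yL) <= sh ql * / hLstar g eta lam ql qr.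
Proof. rewrite tL_eq. pose proof ul_bound. pose proof yL_ge. pose proof al_pos.
  pose proof (adm_h _ Hql).
  assert (E : dd ql qr + pL g eta lam ql qr = yL * asp g eta lam ql) by (unfold yL; field; lra).
  rewrite cL_y. rewrite E in H.
  set (y := yL) in *. set (a := asp g eta lam ql) in *. set (h := sh ql) in *.
  set (v := ustar g eta lam ql qr - vel ql).
  assert (0 < h * a) by nra.
  assert (0 < 1 + 2*y) by lra.
  apply (Rmult_le_reg_r (h * a * (1 + 2*y))). nra.
  replace ((1 + h * v / (h * a * (1 + 2 * y))) * (h * a * (1 + 2 * y))) with (h*a*(1+2*y) + h * v) by (field; lra).
  replace ((1 + y) / (1 + 2 * y) * (h * a * (1 + 2 * y))) with ((1+y)*h*a) by (field; lra).
  unfold v; nra. Qed.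

Lemma tR_bound : (1 + yR) / (1 + 2 * yR) <= sh qr * / hRstar g eta lam ql qr.
Proof. rewrite tR_eq. pose proof ur_bound. pose proof yR_ge. pose proof ar_pos.
  pose proof (adm_h _ Hqr).
  assert (E : dd ql qr + pR g eta lam ql qr = yR * asp g eta lam qr) by (unfold yR; field; lra).
  rewrite cR_y. rewrite E in H.
  set (y := yR) in *. set (a := asp g eta lam qr) in *. set (h := sh qr) in *.
  set (v := vel qr - ustar g eta lam ql qr).
  assert (0 < h * a) by nra.
  assert (0 < 1 + 2*y) by lra.
  apply (Rmult_le_reg_r (h * a * (1 + 2*y))). nra.
  replace ((1 + h * v / (h * a * (1 + 2 * y))) * (h * a * (1 + 2 * y))) with (h*a*(1+2*y) + h * v) by (field; lra).
  replace ((1 + y) / (1 + 2 * y) * (h * a * (1 + 2 * y))) with ((1+y)*h*a) by (field; lra).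
  unfold v; nra. Qed.

Lemma frac_pos y : 0 <= y -> 0 < (1 + y) / (1 + 2 * y).
Proof. intros. unfold Rdiv. apply Rmult_lt_0_compat; [lra|apply Rinv_0_lt_compat; lra]. Qed.

Lemma hLs_pos : 0 < hLstar g eta lam ql qr.
Proof. pose proof tL_bound. pose proof (frac_pos _ yL_ge). pose proof (adm_h _ Hql).
  assert (0 < / hLstar g eta lam ql qr).
  { apply (Rmult_lt_reg_l (sh ql)); lra. }
  rewrite <- (Rinv_inv (hLstar _ _ _ _ _)). apply Rinv_0_lt_compat; auto. Qed.
Lemma hRs_pos : 0 < hRstar g eta lam ql qr.
Proof. pose proof tR_bound. pose proof (frac_pos _ yR_ge). pose proof (adm_h _ Hqr).
  assert (0 < / hRstar g eta lam ql qr).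
  { apply (Rmult_lt_reg_l (sh qr)); lra. }
  rewrite <- (Rinv_inv (hRstar _ _ _ _ _)). apply Rinv_0_lt_compat; auto. Qed.

Lemma S12 : Sig1 g eta lam ql qr < Sig2 g eta lam ql qr.
Proof. unfold Sig1, Sig2. pose proof hLs_pos. pose proof cL_pos. pose proof (adm_h _ Hql).
  assert (E : ustar g eta lam ql qr - (vel ql - cL g eta lam ql qr / sh ql) =
     cL g eta lam ql qr * / hLstar g eta lam ql qr).
  { rewrite invhL. field. lra. }
  assert (0 < cL g eta lam ql qr * / hLstar g eta lam ql qr).
  { apply Rmult_lt_0_compat; auto. apply Rinv_0_lt_compat; auto. }
  lra. Qed.
Lemma S23 : Sig2 g eta lam ql qr < Sig3 g eta lam ql qr.
Proof. unfold Sig3, Sig2. pose proof hRs_pos. pose proof cR_pos. pose proof (adm_h _ Hqr).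
  assert (E : vel qr + cR g eta lam ql qr / sh qr - ustar g eta lam ql qr =
     cR g eta lam ql qr * / hRstar g eta lam ql qr).
  { rewrite invhR. field. lra. }
  assert (0 < cR g eta lam ql qr * / hRstar g eta lam ql qr).
  { apply Rmult_lt_0_compat; auto. apply Rinv_0_lt_compat; auto. }
  lra. Qed.

Lemma qLs_h : sh (qLstar g eta lam ql qr) = hLstar g eta lam ql qr. Proof. reflexivity. Qed.
Lemma qRs_h : sh (qRstar g eta lam ql qr) = hRstar g eta lam ql qr. Proof. reflexivity. Qed.
Lemma qLs_vel : vel (qLstar g eta lam ql qr) = ustar g eta lam ql qr.
Proof. unfold vel. simpl. pose proof hLs_pos. pose proof (adm_h _ Hql). field; repeat split; lra. Qed.
Lemma qRs_vel : vel (qRstar g eta lam ql qr) = ustar g eta lam ql qr.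
Proof. unfold vel. simpl. pose proof hRs_pos. pose proof (adm_h _ Hqr). field; repeat split; lra. Qed.
Lemma qLs_sx : sigxx (qLstar g eta lam ql qr) = sigxx ql * (sh ql / hLstar g eta lam ql qr)^2.
Proof. unfold sigxx at 1. simpl. pose proof hLs_pos. pose proof (adm_h _ Hql). field; repeat split; lra. Qed.
Lemma qLs_sz : sigzz (qLstar g eta lam ql qr) = sigzz ql * (hLstar g eta lam ql qr / sh ql)^2.
Proof. unfold sigzz at 1. simpl. pose proof hLs_pos. pose proof (adm_h _ Hql). field; repeat split; lra. Qed.
Lemma qRs_sx : sigxx (qRstar g eta lam ql qr) = sigxx qr * (sh qr / hRstar g eta lam ql qr)^2.
Proof. unfold sigxx at 1. simpl. pose proof hRs_pos. pose proof (adm_h _ Hqr). field; repeat split; lra. Qed.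
Lemma qRs_sz : sigzz (qRstar g eta lam ql qr) = sigzz qr * (hRstar g eta lam ql qr / sh qr)^2.
Proof. unfold sigzz at 1. simpl. pose proof hRs_pos. pose proof (adm_h _ Hqr). field; repeat split; lra. Qed.

Lemma qLs_adm : adm (qLstar g eta lam ql qr).
Proof. pose proof hLs_pos. pose proof (adm_h _ Hql). pose proof (adm_sx _ Hql). pose proof (adm_sz _ Hql).
  split; [exact H|]. fold (sigxx (qLstar g eta lam ql qr)) (sigzz (qLstar g eta lam ql qr)).
  rewrite qLs_sx, qLs_sz. split; apply Rmult_lt_0_compat; auto; apply pow_lt;
  unfold Rdiv; apply Rmult_lt_0_compat; auto; apply Rinv_0_lt_compat; auto. Qed.
Lemma qRs_adm : adm (qRstar g eta lam ql qr).
Proof. pose proof hRs_pos. pose proof (adm_h _ Hqr). pose proof (adm_sx _ Hqr). pose proof (adm_sz _ Hqr).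
  split; [exact H|]. fold (sigxx (qRstar g eta lam ql qr)) (sigzz (qRstar g eta lam ql qr)).
  rewrite qRs_sx, qRs_sz. split; apply Rmult_lt_0_compat; auto; apply pow_lt;
  unfold Rdiv; apply Rmult_lt_0_compat; auto; apply Rinv_0_lt_compat; auto. Qed.

Lemma qLs_Xh : shxx (qLstar g eta lam ql qr) * sh (qLstar g eta lam ql qr) = shxx ql * sh ql.
Proof. simpl. unfold sigxx. pose proof hLs_pos. pose proof (adm_h _ Hql). field. lra. Qed.
Lemma qRs_Xh : shxx (qRstar g eta lam ql qr) * sh (qRstar g eta lam ql qr) = shxx qr * sh qr.
Proof. simpl. unfold sigxx. pose proof hRs_pos. pose proof (adm_h _ Hqr). field. lra. Qed.
Lemma qLs_Zh : shzz (qLstar g eta lam ql qr) / sh (qLstar g eta lam ql qr) ^ 3 = shzz ql / sh ql ^ 3.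
Proof. simpl. unfold sigzz. pose proof hLs_pos. pose proof (adm_h _ Hql). field. lra. Qed.
Lemma qRs_Zh : shzz (qRstar g eta lam ql qr) / sh (qRstar g eta lam ql qr) ^ 3 = shzz qr / sh qr ^ 3.
Proof. simpl. unfold sigzz. pose proof hRs_pos. pose proof (adm_h _ Hqr). field. lra. Qed.

End Pair.

Definition Lsum g eta lam (phi : st -> R) ql qr :=
  Rmin 0 (Sig1 g eta lam ql qr) * (phi (qLstar g eta lam ql qr) - phi ql)
  + Rmin 0 (Sig2 g eta lam ql qr) * (phi (qRstar g eta lam ql qr) - phi (qLstar g eta lam ql qr))
  + Rmin 0 (Sig3 g eta lam ql qr) * (phi qr - phi (qRstar g eta lam ql qr)).
Definition Rsum g eta lam (phi : st -> R) ql qr :=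
  Rmax 0 (Sig1 g eta lam ql qr) * (phi (qLstar g eta lam ql qr) - phi ql)
  + Rmax 0 (Sig2 g eta lam ql qr) * (phi (qRstar g eta lam ql qr) - phi (qLstar g eta lam ql qr))
  + Rmax 0 (Sig3 g eta lam ql qr) * (phi qr - phi (qRstar g eta lam ql qr)).
Definition Tsum g eta lam (phi : st -> R) ql qr :=
  Sig1 g eta lam ql qr * (phi (qLstar g eta lam ql qr) - phi ql)
  + Sig2 g eta lam ql qr * (phi (qRstar g eta lam ql qr) - phi (qLstar g eta lam ql qr))
  + Sig3 g eta lam ql qr * (phi qr - phi (qRstar g eta lam ql qr)).

Lemma minmax0 s : Rmin 0 s + Rmax 0 s = s.
Proof. destruct (Rle_dec 0 s). rewrite Rmin_left, Rmax_right; lra. rewrite Rmin_right, Rmax_left; lra. Qed.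

Lemma LRsum g eta lam phi ql qr : Lsum g eta lam phi ql qr + Rsum g eta lam phi ql qr = Tsum g eta lam phi ql qr.
Proof. unfold Lsum, Rsum, Tsum. rewrite <- (minmax0 (Sig1 _ _ _ _ _)) at 3.
  rewrite <- (minmax0 (Sig2 _ _ _ _ _)) at 3. rewrite <- (minmax0 (Sig3 _ _ _ _ _)) at 3. ring. Qed.

Lemma shu_eq q : adm q -> shu q = sh q * vel q.
Proof. intros H. pose proof (adm_h _ H). unfold vel. field. lra. Qed.

Section Pair2.
Variables (g eta lam : R) (ql qr : st).
Hypotheses (Hg : 0 < g) (He : 0 < eta) (Hl : 0 < lam) (Hql : adm ql) (Hqr : adm qr).

Let S1 := Sig1 g eta lam ql qr.
Let S2 := Sig2 g eta lam ql qr.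
Let S3 := Sig3 g eta lam ql qr.
Let W1 := qLstar g eta lam ql qr.
Let W2 := qRstar g eta lam ql qr.
Let pis := pistar g eta lam ql qr.

Lemma RH1 : shu W1 - shu ql = S1 * (sh W1 - sh ql) /\
   (shu W1 * vel W1 + pis) - (shu ql * vel ql + Pr g eta lam ql) = S1 * (shu W1 - shu ql).
Proof.
  pose proof (rh_l (sh ql) (vel ql) (hLstar g eta lam ql qr) (ustar g eta lam ql qr) (cL g eta lam ql qr)
    (adm_h _ Hql) (hLs_pos _ _ _ _ _ Hg He Hl Hql Hqr) (cL_pos _ _ _ _ _ Hg He Hl Hql Hqr)
    (invhL _ _ _ _ _ Hg He Hl Hql Hqr)) as [E1 E2].
  unfold W1, S1, pis. rewrite qLs_vel by auto. rewrite (shu_eq ql Hql). rewrite pistar_l by auto.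
  simpl. unfold Sig1. split; [exact E1|]. rewrite <- E2. ring. Qed.

Lemma RH3 : shu qr - shu W2 = S3 * (sh qr - sh W2) /\
   (shu qr * vel qr + Pr g eta lam qr) - (shu W2 * vel W2 + pis) = S3 * (shu qr - shu W2).
Proof.
  pose proof (rh_r (sh qr) (vel qr) (hRstar g eta lam ql qr) (ustar g eta lam ql qr) (cR g eta lam ql qr)
    (adm_h _ Hqr) (hRs_pos _ _ _ _ _ Hg He Hl Hql Hqr) (cR_pos _ _ _ _ _ Hg He Hl Hql Hqr)
    (invhR _ _ _ _ _ Hg He Hl Hql Hqr)) as [E1 E2].
  unfold W2, S3, pis. rewrite qRs_vel by auto. rewrite (shu_eq qr Hqr). rewrite pistar_r by auto.
  simpl. unfold Sig3. split; [exact E1|]. rewrite <- E2. ring. Qed.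

Lemma RH2 : shu W2 - shu W1 = S2 * (sh W2 - sh W1) /\
   (shu W2 * vel W2 + pis) - (shu W1 * vel W1 + pis) = S2 * (shu W2 - shu W1).
Proof. unfold W1, W2, S2. rewrite qLs_vel, qRs_vel by auto. simpl. unfold Sig2. split; ring. Qed.

Lemma S12' : S1 < S2. Proof. apply S12; auto. Qed.
Lemma S23' : S2 < S3. Proof. apply S23; auto. Qed.

Ltac mins := repeat match goal with
  | |- context [Rmin 0 ?s] =>
      first [ rewrite (Rmin_left 0 s) by lra | rewrite (Rmin_right 0 s) by lra ] end.

Lemma FL_h : sh (FluxL g eta lam ql qr) = shu ql + Lsum g eta lam sh ql qr.
Proof. pose proof RH1 as [A1 _]. pose proof RH2 as [A2 _]. pose proof RH3 as [A3 _].
  pose proof S12'; pose proof S23'.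
  simpl. unfold Fh, at0_state, Lsum. fold S1 S2 S3 W1 W2.
  destruct (Rlt_dec 0 S1); [mins; ring|].
  destruct (Rlt_dec 0 S2); [mins; lra|].
  destruct (Rlt_dec 0 S3); mins; lra. Qed.

Lemma FL_hu : shu (FluxL g eta lam ql qr) = shu ql * vel ql + Pr g eta lam ql + Lsum g eta lam shu ql qr.
Proof. pose proof RH1 as [_ A1]. pose proof RH2 as [_ A2]. pose proof RH3 as [_ A3].
  pose proof S12'; pose proof S23'.
  simpl. unfold Fhu, at0_state, at0_pi, Lsum. fold S1 S2 S3 W1 W2 pis.
  destruct (Rlt_dec 0 S1); [mins; ring|].
  destruct (Rlt_dec 0 S2); [destruct (Rlt_dec 0 S3); [mins; lra|lra]|].
  destruct (Rlt_dec 0 S3); mins; lra. Qed.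

Lemma Tsum_h : Tsum g eta lam sh ql qr = shu qr - shu ql.
Proof. pose proof RH1 as [A1 _]. pose proof RH2 as [A2 _]. pose proof RH3 as [A3 _].
  unfold Tsum. fold S1 S2 S3 W1 W2. lra. Qed.
Lemma Tsum_hu : Tsum g eta lam shu ql qr = (shu qr * vel qr + Pr g eta lam qr) - (shu ql * vel ql + Pr g eta lam ql).
Proof. pose proof RH1 as [_ A1]. pose proof RH2 as [_ A2]. pose proof RH3 as [_ A3].
  unfold Tsum. fold S1 S2 S3 W1 W2. lra. Qed.

Lemma FR_h : sh (FluxR g eta lam ql qr) = shu qr - Rsum g eta lam sh ql qr.
Proof. change (sh (FluxR g eta lam ql qr)) with (sh (FluxL g eta lam ql qr)). rewrite FL_h.
  pose proof (LRsum g eta lam sh ql qr). rewrite Tsum_h in H. lra. Qed.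
Lemma FR_hu : shu (FluxR g eta lam ql qr) = shu qr * vel qr + Pr g eta lam qr - Rsum g eta lam shu ql qr.
Proof. change (shu (FluxR g eta lam ql qr)) with (shu (FluxL g eta lam ql qr)). rewrite FL_hu.
  pose proof (LRsum g eta lam shu ql qr). rewrite Tsum_hu in H. lra. Qed.

End Pair2.

Lemma FL_x g eta lam ql qr : shxx (FluxL g eta lam ql qr) = shxx ql * vel ql + Lsum g eta lam shxx ql qr.
Proof. simpl. unfold FwL, Lsum. ring. Qed.
Lemma FL_z g eta lam ql qr : shzz (FluxL g eta lam ql qr) = shzz ql * vel ql + Lsum g eta lam shzz ql qr.
Proof. simpl. unfold FwL, Lsum. ring. Qed.
Lemma FR_x g eta lam ql qr : shxx (FluxR g eta lam ql qr) = shxx qr * vel qr - Rsum g eta lam shxx ql qr.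
Proof. simpl. unfold FwR, Rsum. ring. Qed.
Lemma FR_z g eta lam ql qr : shzz (FluxR g eta lam ql qr) = shzz qr * vel qr - Rsum g eta lam shzz ql qr.
Proof. simpl. unfold FwR, Rsum. ring. Qed.

Fixpoint wsum (L : list (R * st)) (phi : st -> R) : R :=
  match L with nil => 0 | (w, q) :: L' => w * phi q + wsum L' phi end.
Fixpoint wtot (L : list (R * st)) : R :=
  match L with nil => 0 | (w, q) :: L' => w + wtot L' end.
Definition wok (L : list (R * st)) := forall w q, In (w, q) L -> 0 <= w /\ adm q.

Lemma wok_cons w q L : wok ((w, q) :: L) -> 0 <= w /\ adm q /\ wok L.
Proof. intros H. destruct (H w q (or_introl eq_refl)). split; auto. split; auto.
  intros w' q' Hi. apply H. right; auto. Qed.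

Lemma wsum_mono L phi psi : wok L -> (forall q, adm q -> phi q <= psi q) -> wsum L phi <= wsum L psi.
Proof. induction L as [|[w q] L IH]; simpl; intros Hw Hp. lra.
  apply wok_cons in Hw as [H1 [H2 H3]]. specialize (IH H3 Hp). specialize (Hp q H2). nra. Qed.

Lemma wsum_pos L phi : wok L -> 0 < wtot L -> (forall q, adm q -> 0 < phi q) -> 0 < wsum L phi.
Proof. induction L as [|[w q] L IH]; simpl; intros Hw Ht Hp. lra.
  apply wok_cons in Hw as [H1 [H2 H3]].
  assert (0 <= wsum L phi).
  { clear IH Ht. induction L as [|[w' q'] L IH']; simpl. lra.
    apply wok_cons in H3 as [K1 [K2 K3]]. specialize (IH' K3). specialize (Hp q' K2). nra. }
  destruct H1 as [H1|H1].
  - specialize (Hp q H2). nra.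
  - subst. assert (Hw : 0 < wtot L) by lra. specialize (IH H3 Hw Hp). lra. Qed.

Lemma wsum_lin L a0 a1 a2 a3 a4 :
  wsum L (fun q => a0 + a1 * sh q + a2 * shu q + a3 * shxx q + a4 * shzz q)
  = a0 * wtot L + a1 * wsum L sh + a2 * wsum L shu + a3 * wsum L shxx + a4 * wsum L shzz.
Proof. induction L as [|[w q] L IH]; simpl. ring. rewrite IH. ring. Qed.

Lemma wsum_ext L phi psi : (forall q, phi q = psi q) -> wsum L phi = wsum L psi.
Proof. intros H; induction L as [|[w q] L IH]; simpl; auto. rewrite IH, H; auto. Qed.

(* ------- the scheme as a convex combination ------- *)
Section Scheme.
Variables (g eta lam dt : R) (dx : Z -> R) (qn : Z -> st) (i : Z).

Definition qa := qn (i - 1)%Z.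
Definition qb := qn i.
Definition qc := qn (i + 1)%Z.
Definition lm := dt / dx i.
Definition m1 := - Rmin 0 (Sig1 g eta lam qb qc).
Definition m2 := - Rmin 0 (Sig2 g eta lam qb qc).
Definition m3 := - Rmin 0 (Sig3 g eta lam qb qc).
Definition p1 := Rmax 0 (Sig1 g eta lam qa qb).
Definition p2 := Rmax 0 (Sig2 g eta lam qa qb).
Definition p3 := Rmax 0 (Sig3 g eta lam qa qb).

Definition LL : list (R * st) :=
  (1 - lm * (m1 + p3), qb) :: (lm * (m1 - m2), qLstar g eta lam qb qc) ::
  (lm * (m2 - m3), qRstar g eta lam qb qc) :: (lm * m3, qc) ::
  (lm * p1, qa) :: (lm * (p2 - p1), qLstar g eta lam qa qb) ::
  (lm * (p3 - p2), qRstar g eta lam qa qb) :: nil.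

Lemma LL_tot : wtot LL = 1.
Proof. simpl. ring. Qed.

Lemma LL_sum phi : wsum LL phi = phi qb - lm * (Lsum g eta lam phi qb qc + Rsum g eta lam phi qa qb).
Proof. simpl. unfold Lsum, Rsum, m1, m2, m3, p1, p2, p3. ring. Qed.

Hypotheses (Hg : 0 < g) (He : 0 < eta) (Hl : 0 < lam) (Hdt : 0 < dt) (Hdx : forall j, 0 < dx j)
  (Hadm : forall j, adm (qn j)) (Hcfl : CFL g eta lam dt dx qn).

Lemma scheme_LL : scheme g eta lam dt dx qn i = St (wsum LL sh) (wsum LL shu) (wsum LL shxx) (wsum LL shzz).
Proof.
  rewrite !LL_sum. unfold scheme. fold qa qb qc lm.
  pose proof (Hadm (i-1)%Z) as Ha. pose proof (Hadm i) as Hb. pose proof (Hadm (i+1)%Z) as Hc.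
  fold qa in Ha. fold qb in Hb. fold qc in Hc.
  unfold stsub, stscal. f_equal; simpl.
  - pose proof (FL_h g eta lam qb qc) as E1. pose proof (FR_h g eta lam qa qb) as E2. simpl in E1, E2.
    rewrite E1, E2; auto. ring.
  - pose proof (FL_hu g eta lam qb qc) as E1. pose proof (FR_hu g eta lam qa qb) as E2. simpl in E1, E2.
    rewrite E1, E2; auto. ring.
  - pose proof (FL_x g eta lam qb qc) as E1. pose proof (FR_x g eta lam qa qb) as E2. simpl in E1, E2.
    rewrite E1, E2; auto. ring.
  - pose proof (FL_z g eta lam qb qc) as E1. pose proof (FR_z g eta lam qa qb) as E2. simpl in E1, E2.
    rewrite E1, E2; auto. ring.
Qed.

Lemma LL_ok : wok LL.
Proof.
  pose proof (Hadm (i-1)%Z) as Ha. pose proof (Hadm i) as Hb. pose proof (Hadm (i+1)%Z) as Hc.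
  fold qa in Ha. fold qb in Hb. fold qc in Hc.
  pose proof (S12 g eta lam qb qc Hg He Hl Hb Hc). pose proof (S23 g eta lam qb qc Hg He Hl Hb Hc).
  pose proof (S12 g eta lam qa qb Hg He Hl Ha Hb). pose proof (S23 g eta lam qa qb Hg He Hl Ha Hb).
  assert (Hlm : 0 < lm) by (unfold lm; unfold Rdiv; apply Rmult_lt_0_compat; auto; apply Rinv_0_lt_compat; auto).
  assert (C1 : lm * m1 <= /2).
  { pose proof (Hcfl i) as K. fold qb qc in K.
    assert (m1 <= Aspeed g eta lam qb qc).
    { unfold m1, Aspeed. eapply Rle_trans; [|apply Rmax_l].
      destruct (Rle_dec 0 (Sig1 g eta lam qb qc)).
      rewrite Rmin_left by lra. rewrite Rabs_pos_eq by lra. lra.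
      rewrite Rmin_right by lra. rewrite Rabs_left by lra. lra. }
    assert (Rmin (dx i) (dx (i+1)%Z) <= dx i) by apply Rmin_l.
    pose proof (Hdx i). unfold lm. unfold Rdiv.
    apply (Rmult_le_reg_r (dx i)); auto.
    replace (dt * / dx i * m1 * dx i) with (dt * m1) by (field; lra). nra. }
  assert (C3 : lm * p3 <= /2).
  { pose proof (Hcfl (i-1)%Z) as K. replace (i - 1 + 1)%Z with i in K by ring. fold qa qb in K.
    assert (p3 <= Aspeed g eta lam qa qb).
    { unfold p3, Aspeed. eapply Rle_trans; [|apply Rmax_r]. eapply Rle_trans; [|apply Rmax_r].
      destruct (Rle_dec 0 (Sig3 g eta lam qa qb)).
      rewrite Rmax_right by lra. rewrite Rabs_pos_eq by lra. lra.
      rewrite Rmax_left by lra. apply Rabs_pos. }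
    assert (Rmin (dx (i-1)%Z) (dx i) <= dx i) by apply Rmin_r.
    pose proof (Hdx i). unfold lm. unfold Rdiv.
    apply (Rmult_le_reg_r (dx i)); auto.
    replace (dt * / dx i * p3 * dx i) with (dt * p3) by (field; lra). nra. }
  assert (Rmin 0 (Sig1 g eta lam qb qc) <= Rmin 0 (Sig2 g eta lam qb qc)) by (apply Rle_min_compat_l; lra).
  assert (Rmin 0 (Sig2 g eta lam qb qc) <= Rmin 0 (Sig3 g eta lam qb qc)) by (apply Rle_min_compat_l; lra).
  assert (Rmax 0 (Sig1 g eta lam qa qb) <= Rmax 0 (Sig2 g eta lam qa qb)) by (apply Rle_max_compat_l; lra).
  assert (Rmax 0 (Sig2 g eta lam qa qb) <= Rmax 0 (Sig3 g eta lam qa qb)) by (apply Rle_max_compat_l; lra).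
  assert (Rmin 0 (Sig3 g eta lam qb qc) <= 0) by apply Rmin_l.
  assert (0 <= Rmax 0 (Sig1 g eta lam qa qb)) by apply Rmax_l.
  unfold wok, LL. intros w q Hin. simpl in Hin.
  unfold m1, m2, m3, p1, p2, p3 in *.
  repeat destruct Hin as [Hin|Hin]; try (injection Hin; intros; subst); try contradiction; split;
    try apply qLs_adm; try apply qRs_adm; auto; nra.
Qed.
End Scheme.

Lemma wsum_mono_in L phi psi : (forall w q, In (w, q) L -> 0 <= w /\ phi q <= psi q) ->
  wsum L phi <= wsum L psi.
Proof. induction L as [|[w q] L IH]; simpl; intros H. lra.
  destruct (H w q (or_introl eq_refl)) as [H1 H2].
  assert (wsum L phi <= wsum L psi) by (apply IH; intros; apply H; right; auto). nra. Qed.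

Lemma ln_le y : 0 < y -> ln y <= y - 1.
Proof. intros Hy. pose proof (exp_ineq1_le (ln y)). rewrite exp_ln in H; lra. Qed.

Section Tang.
Variables (g eta lam : R).
Hypotheses (Hg : 0 < g) (He : 0 < eta) (Hl : 0 < lam).

Definition ta1 m := - vel m ^2 / 2 + g * sh m - eta/(4*lam) * (ln (sigxx m) + ln (sigzz m)).
Definition ta2 m := vel m.
Definition ta3 m := eta/(4*lam) * (1 - / sigxx m).
Definition ta4 m := eta/(4*lam) * (1 - / sigzz m).
Definition ta0 m := Energy g eta lam m - ta1 m * sh m - ta2 m * shu m - ta3 m * shxx m - ta4 m * shzz m.

Lemma tangent m Q : adm m -> adm Q ->
  ta0 m + ta1 m * sh Q + ta2 m * shu Q + ta3 m * shxx Q + ta4 m * shzz Q <= Energy g eta lam Q.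
Proof.
  intros Hm HQ.
  pose proof (adm_h _ Hm) as h0. pose proof (adm_sx _ Hm) as x0. pose proof (adm_sz _ Hm) as z0.
  pose proof (adm_h _ HQ) as h1. pose proof (adm_sx _ HQ) as x1. pose proof (adm_sz _ HQ) as z1.
  assert (EX : forall q, adm q -> shxx q = sh q * sigxx q) by (intros q Hq; pose proof (adm_h _ Hq); unfold sigxx; field; lra).
  assert (EZ : forall q, adm q -> shzz q = sh q * sigzz q) by (intros q Hq; pose proof (adm_h _ Hq); unfold sigzz; field; lra).
  unfold ta0, ta1, ta2, ta3, ta4, Energy.
  rewrite !(shu_eq _ Hm), !(shu_eq _ HQ), !(EX _ Hm), !(EX _ HQ), !(EZ _ Hm), !(EZ _ HQ).
  rewrite !ln_mult by auto.
  set (k2 := eta/(4*lam)). assert (0 < k2) by (unfold k2; unfold Rdiv; apply Rmult_lt_0_compat; [lra|apply Rinv_0_lt_compat; lra]).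
  set (h := sh m) in *. set (u := vel m). set (sx := sigxx m) in *. set (sz := sigzz m) in *.
  set (h' := sh Q) in *. set (u' := vel Q). set (sx' := sigxx Q) in *. set (sz' := sigzz Q) in *.
  assert (Lx : ln sx' - ln sx <= sx'/sx - 1).
  { assert (P1 : 0 < / sx) by (apply Rinv_0_lt_compat; auto).
    assert (E : ln (sx' / sx) = ln sx' - ln sx) by (unfold Rdiv; rewrite ln_mult, ln_Rinv by auto; ring).
    rewrite <- E. apply ln_le. unfold Rdiv; apply Rmult_lt_0_compat; auto. }
  assert (Lz : ln sz' - ln sz <= sz'/sz - 1).
  { assert (P1 : 0 < / sz) by (apply Rinv_0_lt_compat; auto).
    assert (E : ln (sz' / sz) = ln sz' - ln sz) by (unfold Rdiv; rewrite ln_mult, ln_Rinv by auto; ring).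
    rewrite <- E. apply ln_le. unfold Rdiv; apply Rmult_lt_0_compat; auto. }
  set (lx := ln sx) in *. set (lz := ln sz) in *. set (lx' := ln sx') in *. set (lz' := ln sz') in *.
  assert (Eid : h' * u' ^ 2 / 2 + g * h' ^ 2 / 2 + k2 * h' * (sx' + sz' - (lx' + lz') - 2)
     - ((h * u ^ 2 / 2 + g * h ^ 2 / 2 + k2 * h * (sx + sz - (lx + lz) - 2) -
     (- u ^ 2 / 2 + g * h - k2 * (lx + lz)) * h - u * (h * u) -
     k2 * (1 - / sx) * (h * sx) - k2 * (1 - / sz) * (h * sz)) +
     (- u ^ 2 / 2 + g * h - k2 * (lx + lz)) * h' + u * (h' * u') +
     k2 * (1 - / sx) * (h' * sx') + k2 * (1 - / sz) * (h' * sz'))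
     = h' * (u' - u)^2 / 2 + g * (h' - h)^2 / 2 + k2 * h' * ((sx'/sx - 1) - (lx' - lx))
       + k2 * h' * ((sz'/sz - 1) - (lz' - lz))) by (field; lra).
  assert (0 <= h' * (u' - u)^2 / 2) by (apply Rmult_le_pos; [apply Rmult_le_pos; [lra|apply pow2_ge_0]|lra]).
  assert (0 <= g * (h' - h)^2 / 2) by (apply Rmult_le_pos; [apply Rmult_le_pos; [lra|apply pow2_ge_0]|lra]).
  assert (0 <= k2 * h' * ((sx'/sx - 1) - (lx' - lx))) by (apply Rmult_le_pos; [nra|lra]).
  assert (0 <= k2 * h' * ((sz'/sz - 1) - (lz' - lz))) by (apply Rmult_le_pos; [nra|lra]).
  lra.
Qed.

Lemma ta_self m : adm m ->
  ta0 m + ta1 m * sh m + ta2 m * shu m + ta3 m * shxx m + ta4 m * shzz m = Energy g eta lam m.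
Proof. intros; unfold ta0; ring. Qed.
End Tang.

Section Iface.
Variables (g eta lam : R) (ql qr : st).
Hypotheses (Hg : 0 < g) (He : 0 < eta) (Hl : 0 < lam) (Hql : adm ql) (Hqr : adm qr).

Let k2 := eta / (4*lam).
Lemma k2pos : 0 < k2.
Proof. unfold k2, Rdiv; apply Rmult_lt_0_compat; [lra|apply Rinv_0_lt_compat; lra]. Qed.

Lemma En_Ef q : Energy g eta lam q = Ef g k2 (sh q) (vel q) (sigxx q) (sigzz q).
Proof. reflexivity. Qed.
Lemma Pr_k2 q : Pr g eta lam q = g * sh q ^2/2 + 2*k2*sh q*(sigzz q - sigxx q).
Proof. unfold Pr, k2. field. lra. Qed.
Lemma dPs_k2 q : dPs g eta lam q = g * sh q + 3 * (2*k2*sigzz q) + 2*k2*sigxx q.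
Proof. unfold dPs, k2. field. lra. Qed.

Lemma D1_nonneg :
  0 <= Sig1 g eta lam ql qr * (Energy g eta lam (qLstar g eta lam ql qr) - Energy g eta lam ql)
       - ((Energy g eta lam (qLstar g eta lam ql qr) + pistar g eta lam ql qr) * ustar g eta lam ql qr
          - (Energy g eta lam ql + Pr g eta lam ql) * vel ql).
Proof.
  pose proof (adm_h _ Hql) as h0. pose proof (adm_sx _ Hql). pose proof (adm_sz _ Hql).
  pose proof (hLs_pos _ _ _ _ _ Hg He Hl Hql Hqr) as hs0. pose proof (cL_pos _ _ _ _ _ Hg He Hl Hql Hqr) as c0.
  pose proof (wave_D g k2 (sh ql) (vel ql) (sigxx ql) (sigzz ql) (hLstar g eta lam ql qr)
     (ustar g eta lam ql qr) (cL g eta lam ql qr) h0 hs0 c0 H H0 (invhL _ _ _ _ _ Hg He Hl Hql Hqr)) as WD.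
  cbv zeta in WD.
  rewrite !En_Ef. rewrite qLs_vel, qLs_sx, qLs_sz by auto. rewrite qLs_h.
  rewrite pistar_l by auto. rewrite Pr_k2. unfold Sig1. rewrite WD.
  pose proof k2pos.
  pose proof (tL_bound _ _ _ _ _ Hg He Hl Hql Hqr) as TB. pose proof (yL_ge _ _ _ _ _ Hg He Hl Hql Hqr) as Y.
  pose proof (frac_pos _ Y).
  assert (Ht : sh ql / hLstar g eta lam ql qr = sh ql * / hLstar g eta lam ql qr) by reflexivity.
  rewrite <- Ht in TB.
  set (t := sh ql / hLstar g eta lam ql qr) in *.
  assert (WI := wave_ineq (g * sh ql) (2*k2*sigxx ql) (2*k2*sigzz ql) _ t
     ltac:(nra) ltac:(nra) ltac:(nra) Y ltac:(lra) TB).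
  assert (Ec : cL g eta lam ql qr ^ 2 / sh ql ^ 2 =
     (g * sh ql + 3 * (2 * k2 * sigzz ql) + 2 * k2 * sigxx ql) * (1 + 2 * yL g eta lam ql qr) ^ 2).
  { rewrite cL_y by auto. rewrite <- dPs_k2. rewrite <- (asp_sq g eta lam ql) by auto. field. lra. }
  rewrite Ec.
  apply Rmult_le_pos. apply Rmult_le_pos. apply Rmult_le_pos. lra. apply pow2_ge_0. lra.
  replace (g * sh ql / t) with (g * sh ql / t) by reflexivity.
  assert (E2 : 2 * k2 * sigzz ql * (1 + 2 * t) / t ^ 2 = 2 * k2 * sigzz ql * (1 + 2 * t) / t ^ 2) by reflexivity.
  lra.
Qed.

Lemma D3_nonneg :
  0 <= Sig3 g eta lam ql qr * (Energy g eta lam qr - Energy g eta lam (qRstar g eta lam ql qr))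
       - ((Energy g eta lam qr + Pr g eta lam qr) * vel qr
          - (Energy g eta lam (qRstar g eta lam ql qr) + pistar g eta lam ql qr) * ustar g eta lam ql qr).
Proof.
  pose proof (adm_h _ Hqr) as h0. pose proof (adm_sx _ Hqr). pose proof (adm_sz _ Hqr).
  pose proof (hRs_pos _ _ _ _ _ Hg He Hl Hql Hqr) as hs0. pose proof (cR_pos _ _ _ _ _ Hg He Hl Hql Hqr) as c0.
  assert (Hrel : / hRstar g eta lam ql qr = / sh qr + (- ustar g eta lam ql qr - - vel qr) / cR g eta lam ql qr).
  { rewrite invhR by auto. f_equal. f_equal. ring. }
  pose proof (wave_D g k2 (sh qr) (- vel qr) (sigxx qr) (sigzz qr) (hRstar g eta lam ql qr)
     (- ustar g eta lam ql qr) (cR g eta lam ql qr) h0 hs0 c0 H H0 Hrel) as WD.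
  cbv zeta in WD.
  assert (EF : forall h u sx sz, Ef g k2 h (- u) sx sz = Ef g k2 h u sx sz) by (intros; unfold Ef; field).
  rewrite !EF in WD.
  rewrite !En_Ef. rewrite qRs_vel, qRs_sx, qRs_sz by auto. rewrite qRs_h.
  rewrite pistar_r by auto. rewrite Pr_k2. unfold Sig3.
  match type of WD with ?a = ?b => assert (WD' : 0 <= b -> 0 <= a) by (rewrite WD; auto) end.
  match goal with |- 0 <= ?x => replace x with
    ((- vel qr - cR g eta lam ql qr / sh qr) *
       (Ef g k2 (hRstar g eta lam ql qr) (ustar g eta lam ql qr)
          (sigxx qr * (sh qr / hRstar g eta lam ql qr) ^ 2)
          (sigzz qr * (hRstar g eta lam ql qr / sh qr) ^ 2) -
        Ef g k2 (sh qr) (vel qr) (sigxx qr) (sigzz qr)) -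
     ((Ef g k2 (hRstar g eta lam ql qr) (ustar g eta lam ql qr)
         (sigxx qr * (sh qr / hRstar g eta lam ql qr) ^ 2)
         (sigzz qr * (hRstar g eta lam ql qr / sh qr) ^ 2) +
       (g * sh qr ^ 2 / 2 + 2 * k2 * sh qr * (sigzz qr - sigxx qr) -
        cR g eta lam ql qr * (- ustar g eta lam ql qr - - vel qr))) * - ustar g eta lam ql qr -
      (Ef g k2 (sh qr) (vel qr) (sigxx qr) (sigzz qr) +
       (g * sh qr ^ 2 / 2 + 2 * k2 * sh qr * (sigzz qr - sigxx qr))) * - vel qr)) by ring end.
  apply WD'. clear WD WD'.
  pose proof k2pos.
  pose proof (tR_bound _ _ _ _ _ Hg He Hl Hql Hqr) as TB. pose proof (yR_ge _ _ _ _ _ Hg He Hl Hql Hqr) as Y.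
  pose proof (frac_pos _ Y).
  assert (Ht : sh qr / hRstar g eta lam ql qr = sh qr * / hRstar g eta lam ql qr) by reflexivity.
  rewrite <- Ht in TB.
  set (t := sh qr / hRstar g eta lam ql qr) in *.
  assert (WI := wave_ineq (g * sh qr) (2*k2*sigxx qr) (2*k2*sigzz qr) _ t
     ltac:(nra) ltac:(nra) ltac:(nra) Y ltac:(lra) TB).
  assert (Ec : cR g eta lam ql qr ^ 2 / sh qr ^ 2 =
     (g * sh qr + 3 * (2 * k2 * sigzz qr) + 2 * k2 * sigxx qr) * (1 + 2 * yR g eta lam ql qr) ^ 2).
  { rewrite cR_y by auto. rewrite <- dPs_k2. rewrite <- (asp_sq g eta lam qr) by auto. field. lra. }
  rewrite Ec.
  apply Rmult_le_pos. apply Rmult_le_pos. apply Rmult_le_pos. lra. apply pow2_ge_0. lra.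
  lra.
Qed.

Lemma iface : Gflux g eta lam qr - Gflux g eta lam ql <= Tsum g eta lam (Energy g eta lam) ql qr.
Proof. pose proof D1_nonneg. pose proof D3_nonneg. unfold Gflux, Tsum.
  unfold Sig2. set (E0 := Energy g eta lam ql) in *. set (E1 := Energy g eta lam (qLstar g eta lam ql qr)) in *.
  set (E2 := Energy g eta lam (qRstar g eta lam ql qr)) in *. set (E3 := Energy g eta lam qr) in *.
  set (us := ustar g eta lam ql qr) in *. set (pis := pistar g eta lam ql qr) in *.
  assert (Eq : Sig1 g eta lam ql qr * (E1 - E0) + us * (E2 - E1) + Sig3 g eta lam ql qr * (E3 - E2)
    - ((E3 + Pr g eta lam qr) * vel qr - (E0 + Pr g eta lam ql) * vel ql)
    = (Sig1 g eta lam ql qr * (E1 - E0) - ((E1 + pis) * us - (E0 + Pr g eta lam ql) * vel ql))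
    + (Sig3 g eta lam ql qr * (E3 - E2) - ((E3 + Pr g eta lam qr) * vel qr - (E2 + pis) * us))) by ring.
  lra. Qed.
End Iface.

Lemma inv_eq_h a b : 0 < a -> 0 < b -> / a = / b -> a = b.
Proof. intros. rewrite <- (Rinv_inv a), <- (Rinv_inv b). rewrite H1; auto. Qed.

Lemma qLstar_eq g eta lam ql qr : 0 < g -> 0 < eta -> 0 < lam -> adm ql -> adm qr ->
  ustar g eta lam ql qr = vel ql -> qLstar g eta lam ql qr = ql.
Proof. intros Hg He Hl Hql Hqr Hu.
  assert (Eh : hLstar g eta lam ql qr = sh ql).
  { apply inv_eq_h. apply hLs_pos; auto. apply adm_h; auto.
    rewrite invhL by auto. rewrite Hu. unfold Rminus. rewrite Rplus_opp_r. unfold Rdiv. ring. }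
  pose proof (adm_h _ Hql). pose proof (shu_eq _ Hql).
  unfold qLstar. cbv zeta. rewrite Eh, Hu. destruct ql as [a b c d]. simpl in *. unfold sigxx, sigzz. simpl.
  f_equal; try field; lra. Qed.

Lemma qRstar_eq g eta lam ql qr : 0 < g -> 0 < eta -> 0 < lam -> adm ql -> adm qr ->
  ustar g eta lam ql qr = vel qr -> qRstar g eta lam ql qr = qr.
Proof. intros Hg He Hl Hql Hqr Hu.
  assert (Eh : hRstar g eta lam ql qr = sh qr).
  { apply inv_eq_h. apply hRs_pos; auto. apply adm_h; auto.
    rewrite invhR by auto. rewrite Hu. unfold Rminus. rewrite Rplus_opp_r. unfold Rdiv. ring. }
  pose proof (adm_h _ Hqr). pose proof (shu_eq _ Hqr).
  unfold qRstar. cbv zeta. rewrite Eh, Hu. destruct qr as [a b c d]. simpl in *. unfold sigxx, sigzz. simpl.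
  f_equal; try field; lra. Qed.

Lemma ustar_self g eta lam q : 0 < g -> 0 < eta -> 0 < lam -> adm q -> ustar g eta lam q q = vel q.
Proof. intros. assert (ustar g eta lam q q - vel q = 0).
  { rewrite ustar_l by auto. replace (vel q - vel q) with 0 by ring.
    replace (cR g eta lam q q * 0 + Pr g eta lam q - Pr g eta lam q) with 0 by ring. unfold Rdiv; ring. }
  lra. Qed.

Definition Gnum g eta lam ql qr := Gflux g eta lam ql + Lsum g eta lam (Energy g eta lam) ql qr.

Lemma Gnum_self g eta lam q : 0 < g -> 0 < eta -> 0 < lam -> adm q -> Gnum g eta lam q q = Gflux g eta lam q.
Proof. intros. unfold Gnum, Lsum. rewrite qLstar_eq, qRstar_eq by (auto; apply ustar_self; auto).
  ring. Qed.

Lemma sxx_iff q k : adm q -> 0 < k -> (sxx q <= k <-> / (k*k) <= shxx q * sh q).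
Proof. intros Hq Hk. pose proof (adm_h _ Hq). pose proof (adm_sx _ Hq).
  unfold sxx. set (s := sqrt (sigxx q)).
  assert (Hs : 0 < s) by (apply sqrt_lt_R0; auto).
  assert (Hss : s * s = sigxx q) by (apply sqrt_sqrt; lra).
  assert (EX : shxx q * sh q = (s * sh q) * (s * sh q)).
  { replace ((s * sh q) * (s * sh q)) with ((s*s) * sh q * sh q) by ring. rewrite Hss. unfold sigxx. field. lra. }
  rewrite EX. set (r := s * sh q). assert (0 < r) by (unfold r; nra).
  assert (Kk : 0 < k*k) by (apply Rmult_lt_0_compat; lra).
  split; intros K1.
  - assert (1 <= k * r).
    { apply (Rmult_le_compat_r r) in K1; [|lra]. rewrite Rinv_l in K1 by lra. lra. }
    apply (Rmult_le_reg_l (k*k)). exact Kk. rewrite Rinv_r by lra.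
    replace (k*k*(r*r)) with ((k*r)*(k*r)) by ring. nra.
  - assert (1 <= (k*r)*(k*r)).
    { apply (Rmult_le_compat_l (k*k)) in K1; [|lra]. rewrite Rinv_r in K1 by lra.
      replace ((k*r)*(k*r)) with (k*k*(r*r)) by ring. lra. }
    assert (0 < k * r) by (apply Rmult_lt_0_compat; lra). assert (1 <= k * r) by nra.
    apply (Rmult_le_reg_r r); auto. rewrite Rinv_l by lra. lra. Qed.

Lemma szz_iff q k : adm q -> 0 < k -> (k <= szz q <-> k * k <= shzz q / sh q ^ 3).
Proof. intros Hq Hk. pose proof (adm_h _ Hq). pose proof (adm_sz _ Hq).
  unfold szz. set (s := sqrt (sigzz q)).
  assert (Hs : 0 < s) by (apply sqrt_lt_R0; auto).
  assert (Hss : s * s = sigzz q) by (apply sqrt_sqrt; lra).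
  assert (EZ : shzz q / sh q ^ 3 = (s / sh q) * (s / sh q)).
  { replace ((s / sh q) * (s / sh q)) with ((s*s) / (sh q * sh q)) by (field; lra). rewrite Hss. unfold sigzz. field. lra. }
  rewrite EZ. set (r := s / sh q). assert (0 < r) by (unfold r, Rdiv; apply Rmult_lt_0_compat; auto; apply Rinv_0_lt_compat; auto).
  split; intros K1. nra. nra. Qed.

Section Parts.
Variables (g eta lam dt : R) (dx : Z -> R) (qn : Z -> st).
Hypotheses (Hg : 0 < g) (He : 0 < eta) (Hl : 0 < lam) (Hdt : 0 < dt) (Hdx : forall j, 0 < dx j)
  (Hadm : forall j, adm (qn j)) (Hcfl : CFL g eta lam dt dx qn).

Lemma LL_in i (P : st -> Prop) :
  (forall j, P (qn j)) ->
  (forall ql qr, adm ql -> adm qr -> P ql -> P (qLstar g eta lam ql qr)) ->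
  (forall ql qr, adm ql -> adm qr -> P qr -> P (qRstar g eta lam ql qr)) ->
  forall w q, In (w, q) (LL g eta lam dt dx qn i) -> P q.
Proof. intros H0 H1 H2 w q Hin. unfold LL, qa, qb, qc in Hin. simpl in Hin.
  repeat destruct Hin as [Hin|Hin]; try (injection Hin; intros; subst); try contradiction; auto. Qed.

Lemma pos_part i : adm (scheme g eta lam dt dx qn i).
Proof. rewrite scheme_LL by auto. pose proof (LL_ok g eta lam dt dx qn i Hg He Hl Hdt Hdx Hadm Hcfl) as Ok.
  pose proof (LL_tot g eta lam dt dx qn i) as T.
  assert (P1 : 0 < wsum (LL g eta lam dt dx qn i) sh) by (apply wsum_pos; auto; [lra|apply adm_h]).
  assert (P2 : 0 < wsum (LL g eta lam dt dx qn i) shxx) by (apply wsum_pos; auto; [lra|apply adm_X]).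
  assert (P3 : 0 < wsum (LL g eta lam dt dx qn i) shzz) by (apply wsum_pos; auto; [lra|apply adm_Z]).
  split; [exact P1|]. simpl. split; unfold Rdiv; apply Rmult_lt_0_compat; auto; apply Rinv_0_lt_compat; auto. Qed.

Lemma energy_part i :
  Energy g eta lam (scheme g eta lam dt dx qn i) - Energy g eta lam (qn i)
  + dt / dx i * (Gnum g eta lam (qn i) (qn (i + 1)%Z) - Gnum g eta lam (qn (i - 1)%Z) (qn i)) <= 0.
Proof.
  pose proof (pos_part i) as Hs.
  pose proof (LL_ok g eta lam dt dx qn i Hg He Hl Hdt Hdx Hadm Hcfl) as Ok.
  pose proof (LL_tot g eta lam dt dx qn i) as T.
  set (m := scheme g eta lam dt dx qn i) in *.
  assert (J : Energy g eta lam m <= wsum (LL g eta lam dt dx qn i) (Energy g eta lam)).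
  { rewrite <- (ta_self g eta lam m Hs).
    assert (Hm : m = St (wsum (LL g eta lam dt dx qn i) sh) (wsum (LL g eta lam dt dx qn i) shu)
       (wsum (LL g eta lam dt dx qn i) shxx) (wsum (LL g eta lam dt dx qn i) shzz)) by (apply scheme_LL; auto).
    assert (E : ta0 g eta lam m + ta1 g eta lam m * sh m + ta2 m * shu m + ta3 eta lam m * shxx m + ta4 eta lam m * shzz m
      = wsum (LL g eta lam dt dx qn i) (fun q => ta0 g eta lam m + ta1 g eta lam m * sh q + ta2 m * shu q + ta3 eta lam m * shxx q + ta4 eta lam m * shzz q)).
    { rewrite wsum_lin, T.
      assert (e1 : sh m = wsum (LL g eta lam dt dx qn i) sh) by (rewrite Hm; reflexivity).
      assert (e2 : shu m = wsum (LL g eta lam dt dx qn i) shu) by (rewrite Hm; reflexivity).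
      assert (e3 : shxx m = wsum (LL g eta lam dt dx qn i) shxx) by (rewrite Hm; reflexivity).
      assert (e4 : shzz m = wsum (LL g eta lam dt dx qn i) shzz) by (rewrite Hm; reflexivity).
      rewrite <- e1, <- e2, <- e3, <- e4. ring. }
    rewrite E. apply wsum_mono_in. intros w q Hin. destruct (Ok w q Hin) as [Hw Hq]. split; auto.
    apply tangent; auto. }
  rewrite LL_sum in J. unfold qa, qb, qc, lm in J.
  pose proof (iface g eta lam (qn (i-1)%Z) (qn i) Hg He Hl (Hadm _) (Hadm _)) as I.
  pose proof (LRsum g eta lam (Energy g eta lam) (qn (i-1)%Z) (qn i)) as LR.
  assert (Hlm : 0 < dt / dx i) by (unfold Rdiv; apply Rmult_lt_0_compat; auto; apply Rinv_0_lt_compat; auto).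
  unfold Gnum.
  set (x := dt / dx i) in *.
  assert (0 <= x * (Gflux g eta lam (qn i) - Gflux g eta lam (qn (i - 1)%Z)
                    - Tsum g eta lam (Energy g eta lam) (qn (i - 1)%Z) (qn i)) -> False \/ True) by (intros; right; auto).
  assert (x * (Tsum g eta lam (Energy g eta lam) (qn (i - 1)%Z) (qn i) - (Gflux g eta lam (qn i) - Gflux g eta lam (qn (i - 1)%Z))) >= 0) by (apply Rle_ge; apply Rmult_le_pos; lra).
  nra.
Qed.

Lemma maxp_part k : 0 < k ->
  ((forall j, sxx (qn j) <= k) -> forall i, sxx (scheme g eta lam dt dx qn i) <= k) /\
  ((forall j, k <= szz (qn j)) -> forall i, k <= szz (scheme g eta lam dt dx qn i)).
Proof.
  intros Hk. split; intros Hj i; pose proof (pos_part i) as Hs;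
  pose proof (LL_ok g eta lam dt dx qn i Hg He Hl Hdt Hdx Hadm Hcfl) as Ok;
  pose proof (LL_tot g eta lam dt dx qn i) as T;
  pose proof (scheme_LL g eta lam dt dx qn i Hg He Hl Hadm) as Hm;
  set (m := scheme g eta lam dt dx qn i) in *;
  assert (h0 : 0 < sh m) by (apply adm_h; auto).
  - apply sxx_iff; auto. set (c := / (k*k)).
    assert (Hc : 0 < c) by (unfold c; apply Rinv_0_lt_compat; apply Rmult_lt_0_compat; lra).
    assert (Pin : forall w q, In (w, q) (LL g eta lam dt dx qn i) -> c <= shxx q * sh q).
    { apply LL_in.
      - intros j. apply sxx_iff; auto.
      - intros ql qr Hql Hqr H. rewrite qLs_Xh; auto.
      - intros ql qr Hql Hqr H. rewrite qRs_Xh; auto. }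
    set (hb := sh m) in *.
    assert (W : wsum (LL g eta lam dt dx qn i) (fun q => (2 * c / hb) + (- c / (hb * hb)) * sh q + 0 * shu q + 0 * shxx q + 0 * shzz q)
               <= wsum (LL g eta lam dt dx qn i) shxx).
    { apply wsum_mono_in. intros w q Hin. destruct (Ok w q Hin) as [Hw Hq]. split; auto.
      pose proof (Pin w q Hin). pose proof (adm_h _ Hq).
      assert (c / sh q <= shxx q).
      { apply (Rmult_le_reg_r (sh q)); auto. unfold Rdiv. rewrite Rmult_assoc, Rinv_l by lra. lra. }
      assert (2 * c / hb + - c / (hb * hb) * sh q <= c / sh q).
      { assert (E : c / sh q - (2 * c / hb + - c / (hb * hb) * sh q) = c * (sh q - hb)^2 / (sh q * hb * hb))
          by (field; split; lra).
        assert (0 <= c * (sh q - hb)^2 / (sh q * hb * hb)).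
        { unfold Rdiv. apply Rmult_le_pos. apply Rmult_le_pos; [lra|apply pow2_ge_0].
          left; apply Rinv_0_lt_compat. apply Rmult_lt_0_compat; [|lra]. apply Rmult_lt_0_compat; lra. }
        lra. }
      lra. }
    assert (e1 : hb = wsum (LL g eta lam dt dx qn i) sh) by (unfold hb; rewrite Hm; reflexivity).
    assert (e3 : shxx m = wsum (LL g eta lam dt dx qn i) shxx) by (rewrite Hm; reflexivity).
    rewrite wsum_lin, T in W. rewrite <- e1, <- e3 in W.
    assert (c / hb <= shxx m).
    { replace (c / hb) with (2 * c / hb * 1 + - c / (hb * hb) * hb + 0 * wsum (LL g eta lam dt dx qn i) shu +
       0 * shxx m + 0 * wsum (LL g eta lam dt dx qn i) shzz) by (field; lra).
      exact W. }
    apply (Rmult_le_compat_r hb) in H; [|lra]. unfold Rdiv in H. rewrite Rmult_assoc, Rinv_l in H by lra. lra.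
  - apply szz_iff; auto. set (c := k * k).
    assert (Hc : 0 < c) by (unfold c; apply Rmult_lt_0_compat; lra).
    assert (Pin : forall w q, In (w, q) (LL g eta lam dt dx qn i) -> c <= shzz q / sh q ^ 3).
    { apply LL_in.
      - intros j. apply szz_iff; auto.
      - intros ql qr Hql Hqr H. rewrite qLs_Zh; auto.
      - intros ql qr Hql Hqr H. rewrite qRs_Zh; auto. }
    set (hb := sh m) in *.
    assert (W : wsum (LL g eta lam dt dx qn i) (fun q => (- 2 * c * hb^3) + (3 * c * hb^2) * sh q + 0 * shu q + 0 * shxx q + 0 * shzz q)
               <= wsum (LL g eta lam dt dx qn i) shzz).
    { apply wsum_mono_in. intros w q Hin. destruct (Ok w q Hin) as [Hw Hq]. split; auto.
      pose proof (Pin w q Hin). pose proof (adm_h _ Hq).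
      assert (c * sh q ^ 3 <= shzz q).
      { apply (Rmult_le_compat_r (sh q ^3)) in H; [|left; apply pow_lt; lra].
        unfold Rdiv in H. rewrite Rmult_assoc, Rinv_l in H by (apply pow_nonzero; lra). lra. }
      assert (- 2 * c * hb^3 + 3 * c * hb^2 * sh q <= c * sh q ^ 3).
      { assert (E : c * sh q ^ 3 - (- 2 * c * hb^3 + 3 * c * hb^2 * sh q) = c * (sh q - hb)^2 * (sh q + 2 * hb))
          by ring.
        assert (0 <= c * (sh q - hb)^2 * (sh q + 2 * hb)).
        { apply Rmult_le_pos. apply Rmult_le_pos; [lra|apply pow2_ge_0]. lra. }
        lra. }
      lra. }
    assert (e1 : hb = wsum (LL g eta lam dt dx qn i) sh) by (unfold hb; rewrite Hm; reflexivity).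
    assert (e3 : shzz m = wsum (LL g eta lam dt dx qn i) shzz) by (rewrite Hm; reflexivity).
    rewrite wsum_lin, T in W. rewrite <- e1, <- e3 in W.
    assert (c * hb ^ 3 <= shzz m).
    { replace (c * hb ^ 3) with (- 2 * c * hb^3 * 1 + 3 * c * hb^2 * hb + 0 * wsum (LL g eta lam dt dx qn i) shu +
       0 * wsum (LL g eta lam dt dx qn i) shxx + 0 * shzz m) by ring.
      exact W. }
    apply (Rmult_le_reg_r (hb ^ 3)). apply pow_lt; lra.
    unfold Rdiv. rewrite Rmult_assoc, Rinv_l by (apply pow_nonzero; lra). lra.
Qed.

Lemma steady_part :
  (forall j, vel (qn j) = 0) -> (forall j k, Pr g eta lam (qn j) = Pr g eta lam (qn k)) ->
  forall i, scheme g eta lam dt dx qn i = qn i.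
Proof.
  intros Hv HP i. rewrite scheme_LL by auto.
  assert (US : forall a b, ustar g eta lam (qn a) (qn b) = 0).
  { intros a b. assert (ustar g eta lam (qn a) (qn b) - vel (qn a) = 0).
    { rewrite ustar_l by auto. rewrite !Hv, (HP a b). unfold Rdiv. ring. }
    rewrite Hv in H. lra. }
  assert (L0 : forall phi, Lsum g eta lam phi (qn i) (qn (i+1)%Z) = 0).
  { intros phi. unfold Lsum. rewrite qLstar_eq by (auto; rewrite US, Hv; auto).
    pose proof (S23 g eta lam (qn i) (qn (i+1)%Z) Hg He Hl (Hadm _) (Hadm _)).
    unfold Sig2 in *. rewrite US in *. rewrite Rmin_left with (y := 0) by lra.
    rewrite (Rmin_left 0 (Sig3 _ _ _ _ _)) by lra. ring. }
  assert (R0 : forall phi, Rsum g eta lam phi (qn (i-1)%Z) (qn i) = 0).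
  { intros phi. unfold Rsum. rewrite qRstar_eq by (auto; rewrite US, Hv; auto).
    pose proof (S12 g eta lam (qn (i-1)%Z) (qn i) Hg He Hl (Hadm _) (Hadm _)).
    unfold Sig2 in *. rewrite US in *. rewrite Rmax_left with (y := 0) by lra.
    rewrite (Rmax_left 0 (Sig1 _ _ _ _ _)) by lra. ring. }
  rewrite !LL_sum. unfold qa, qb, qc. rewrite !L0, !R0.
  destruct (qn i); simpl; f_equal; ring.
Qed.
End Parts.

Lemma comp_le_norm p : Rabs (sh p) <= stnorm p /\ Rabs (shu p) <= stnorm p /\
   Rabs (shxx p) <= stnorm p /\ Rabs (shzz p) <= stnorm p.
Proof. unfold stnorm.
  pose proof (Rmax_l (Rabs (sh p)) (Rmax (Rabs (shu p)) (Rmax (Rabs (shxx p)) (Rabs (shzz p))))).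
  pose proof (Rmax_r (Rabs (sh p)) (Rmax (Rabs (shu p)) (Rmax (Rabs (shxx p)) (Rabs (shzz p))))).
  pose proof (Rmax_l (Rabs (shu p)) (Rmax (Rabs (shxx p)) (Rabs (shzz p)))).
  pose proof (Rmax_r (Rabs (shu p)) (Rmax (Rabs (shxx p)) (Rabs (shzz p)))).
  pose proof (Rmax_l (Rabs (shxx p)) (Rabs (shzz p))).
  pose proof (Rmax_r (Rabs (shxx p)) (Rabs (shzz p))). lra. Qed.

Lemma norm_ge0 p : 0 <= stnorm p.
Proof. pose proof (comp_le_norm p). pose proof (Rabs_pos (sh p)). lra. Qed.

Lemma stdist_sym a b : stdist a b = stdist b a.
Proof. unfold stdist, stnorm, stsub; simpl.
  rewrite (Rabs_minus_sym (sh a)), (Rabs_minus_sym (shu a)), (Rabs_minus_sym (shxx a)), (Rabs_minus_sym (shzz a)).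
  reflexivity. Qed.

Lemma stdist_tri a b c : stdist a c <= stdist a b + stdist b c.
Proof. unfold stdist at 1. unfold stnorm at 1. simpl.
  destruct (comp_le_norm (stsub a b)) as [A1 [A2 [A3 A4]]].
  destruct (comp_le_norm (stsub b c)) as [B1 [B2 [B3 B4]]].
  unfold stdist. simpl in *.
  assert (T : forall x y z : R, Rabs (x - z) <= Rabs (x - y) + Rabs (y - z)).
  { intros. replace (x - z) with ((x - y) + (y - z)) by ring. apply Rabs_triang. }
  repeat apply Rmax_lub.
  - pose proof (T (sh a) (sh b) (sh c)); lra.
  - pose proof (T (shu a) (shu b) (shu c)); lra.
  - pose proof (T (shxx a) (shxx b) (shxx c)); lra.
  - pose proof (T (shzz a) (shzz b) (shzz c)); lra.
Qed.

Definition near (q : st) (P : st -> st -> Prop) := exists d, 0 < d /\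
  forall ql qr, adm ql -> adm qr -> stdist ql q < d -> stdist qr q < d -> P ql qr.

Lemma near_and q P Q : near q P -> near q Q -> near q (fun a b => P a b /\ Q a b).
Proof. intros [d1 [H1 K1]] [d2 [H2 K2]]. exists (Rmin d1 d2). split. apply Rmin_pos; auto.
  intros ql qr A B C D. pose proof (Rmin_l d1 d2). pose proof (Rmin_r d1 d2). split.
  apply K1; auto; lra. apply K2; auto; lra. Qed.

Lemma near_mono q (P Q : st -> st -> Prop) : near q P -> (forall a b, adm a -> adm b -> P a b -> Q a b) -> near q Q.
Proof. intros [d [H K]] HPQ. exists d. split; auto. Qed.

Definition ctsAt q (f : st -> st -> R) := forall eps, 0 < eps -> near q (fun a b => Rabs (f a b - f q q) < eps).

Lemma cts_ext q f f' : adm q -> (forall a b, adm a -> adm b -> f a b = f' a b) -> ctsAt q f' -> ctsAt q f.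
Proof. intros Hq E C eps He. destruct (C eps He) as [d [Hd K]]. exists d. split; auto.
  intros. rewrite !E; auto. Qed.

Lemma cts_const q c : ctsAt q (fun _ _ => c).
Proof. intros eps He. exists 1. split. lra. intros. rewrite Rminus_diag_eq, Rabs_R0; auto. Qed.

Definition c1 (phi : R -> R) a := forall eps, 0 < eps -> exists d, 0 < d /\ forall x, Rabs (x - a) < d -> Rabs (phi x - phi a) < eps.
Definition c2 (phi : R -> R -> R) a b := forall eps, 0 < eps -> exists d, 0 < d /\
  forall x y, Rabs (x - a) < d -> Rabs (y - b) < d -> Rabs (phi x y - phi a b) < eps.

Lemma c1_of_cpt phi a : continuity_pt phi a -> c1 phi a.
Proof. intros C eps He. destruct (C eps He) as [d [Hd K]]. exists d. split; auto.
  intros x Hx. destruct (Req_dec x a). subst. rewrite Rminus_diag_eq, Rabs_R0; auto.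
  apply (K x). split. split. constructor. auto. exact Hx. Qed.

Lemma cts_c1 q f phi : c1 phi (f q q) -> ctsAt q f -> ctsAt q (fun a b => phi (f a b)).
Proof. intros C F eps He. destruct (C eps He) as [d [Hd K]]. destruct (F d Hd) as [d' [Hd' K']].
  exists d'. split; [assumption|]; intros. apply K. apply K'; auto. Qed.

Lemma cts_c2 q f g phi : c2 phi (f q q) (g q q) -> ctsAt q f -> ctsAt q g -> ctsAt q (fun a b => phi (f a b) (g a b)).
Proof. intros C F G eps He. destruct (C eps He) as [d [Hd K]].
  destruct (near_and _ _ _ (F d Hd) (G d Hd)) as [d' [Hd' K']].
  exists d'. split; [assumption|]; intros. destruct (K' ql qr); auto. Qed.

Lemma c2_plus a b : c2 Rplus a b.
Proof. intros eps He. exists (eps/2). split. lra. intros x y Hx Hy.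
  replace (x + y - (a + b)) with ((x - a) + (y - b)) by ring.
  eapply Rle_lt_trans. apply Rabs_triang. lra. Qed.

Lemma c2_mult a b : c2 Rmult a b.
Proof. intros eps He.
  set (d := Rmin 1 (eps / (2 * (Rabs a + Rabs b + 1)))).
  assert (Hp : 0 < Rabs a + Rabs b + 1) by (pose proof (Rabs_pos a); pose proof (Rabs_pos b); lra).
  assert (Hd : 0 < d). { apply Rmin_pos. lra. unfold Rdiv. apply Rmult_lt_0_compat. lra. apply Rinv_0_lt_compat. lra. }
  exists d. split; [assumption|]; intros x y Hx Hy.
  assert (d <= 1) by apply Rmin_l.
  assert (Hd2 : d * (2 * (Rabs a + Rabs b + 1)) <= eps).
  { pose proof (Rmin_r 1 (eps / (2 * (Rabs a + Rabs b + 1)))). fold d in H0.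
    apply (Rmult_le_compat_r (2 * (Rabs a + Rabs b + 1))) in H0; [|lra].
    unfold Rdiv in H0. rewrite Rmult_assoc, Rinv_l in H0 by lra. lra. }
  replace (x * y - a * b) with ((x - a) * y + a * (y - b)) by ring.
  eapply Rle_lt_trans. apply Rabs_triang. rewrite !Rabs_mult.
  assert (Rabs y <= Rabs b + 1).
  { replace y with (b + (y - b)) by ring. eapply Rle_trans. apply Rabs_triang. lra. }
  pose proof (Rabs_pos (x - a)). pose proof (Rabs_pos a). pose proof (Rabs_pos (y-b)). pose proof (Rabs_pos y).
  assert (Rabs (x - a) * Rabs y <= d * (Rabs b + 1)) by (apply Rmult_le_compat; lra).
  assert (Rabs a * Rabs (y - b) <= Rabs a * d) by (apply Rmult_le_compat_l; lra).
  nra. Qed.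

Lemma c1_opp a : c1 Ropp a.
Proof. intros eps He. exists eps. split; [assumption|]; intros x Hx.
  replace (- x - - a) with (- (x - a)) by ring. rewrite Rabs_Ropp. auto. Qed.

Lemma c1_inv a : a <> 0 -> c1 Rinv a.
Proof. intros Ha. apply c1_of_cpt.
  change Rinv with (fun x => / (id x)). apply (continuity_pt_inv id a).
  apply derivable_continuous_pt. apply derivable_pt_id. auto. Qed.

Lemma c1_sqrt a : 0 <= a -> c1 sqrt a.
Proof. intros. apply c1_of_cpt. apply continuity_pt_sqrt; auto. Qed.

Lemma c1_max0 a : c1 (fun x => Rmax 0 x) a.
Proof. intros eps He. exists eps. split; [assumption|]; intros x Hx.
  apply Rle_lt_trans with (Rabs (x - a)); auto.
  unfold Rmax. destruct (Rle_dec 0 x), (Rle_dec 0 a);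
  unfold Rabs; repeat destruct Rcase_abs; lra. Qed.

Lemma cts_plus q f g : ctsAt q f -> ctsAt q g -> ctsAt q (fun a b => f a b + g a b).
Proof. intros; apply (cts_c2 q f g Rplus); auto. apply c2_plus. Qed.
Lemma cts_mult q f g : ctsAt q f -> ctsAt q g -> ctsAt q (fun a b => f a b * g a b).
Proof. intros; apply (cts_c2 q f g Rmult); auto. apply c2_mult. Qed.
Lemma cts_opp q f : ctsAt q f -> ctsAt q (fun a b => - f a b).
Proof. intros; apply (cts_c1 q f Ropp); auto. apply c1_opp. Qed.
Lemma cts_minus q f g : ctsAt q f -> ctsAt q g -> ctsAt q (fun a b => f a b - g a b).
Proof. intros. unfold Rminus. apply cts_plus; auto. apply cts_opp; auto. Qed.
Lemma cts_inv q f : f q q <> 0 -> ctsAt q f -> ctsAt q (fun a b => / f a b).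
Proof. intros; apply (cts_c1 q f Rinv); auto. apply c1_inv; auto. Qed.
Lemma cts_div q f g : g q q <> 0 -> ctsAt q f -> ctsAt q g -> ctsAt q (fun a b => f a b / g a b).
Proof. intros. unfold Rdiv. apply cts_mult; auto. apply cts_inv; auto. Qed.
Lemma cts_sqrt q f : 0 <= f q q -> ctsAt q f -> ctsAt q (fun a b => sqrt (f a b)).
Proof. intros; apply (cts_c1 q f sqrt); auto. apply c1_sqrt; auto. Qed.
Lemma cts_max0 q f : ctsAt q f -> ctsAt q (fun a b => Rmax 0 (f a b)).
Proof. intros; apply (cts_c1 q f (fun x => Rmax 0 x)); auto. apply c1_max0. Qed.

Lemma cts_compL q (comp : st -> R) : (forall p, Rabs (comp p) <= stnorm p) ->
  (forall a b, comp (stsub a b) = comp a - comp b) -> ctsAt q (fun a b => comp a).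
Proof. intros Hc Hs eps He. exists eps. split; [assumption|]; intros ql qr _ _ H1 _.
  rewrite <- Hs. eapply Rle_lt_trans; [apply Hc|]. exact H1. Qed.
Lemma cts_compR q (comp : st -> R) : (forall p, Rabs (comp p) <= stnorm p) ->
  (forall a b, comp (stsub a b) = comp a - comp b) -> ctsAt q (fun a b => comp b).
Proof. intros Hc Hs eps He. exists eps. split; [assumption|]; intros ql qr _ _ _ H1.
  rewrite <- Hs. eapply Rle_lt_trans; [apply Hc|]. exact H1. Qed.

Lemma cts_hL q : ctsAt q (fun a b => sh a). Proof. apply cts_compL. apply comp_le_norm. reflexivity. Qed.
Lemma cts_huL q : ctsAt q (fun a b => shu a). Proof. apply cts_compL. apply comp_le_norm. reflexivity. Qed.
Lemma cts_xL q : ctsAt q (fun a b => shxx a). Proof. apply cts_compL. apply comp_le_norm. reflexivity. Qed.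
Lemma cts_zL q : ctsAt q (fun a b => shzz a). Proof. apply cts_compL. apply comp_le_norm. reflexivity. Qed.
Lemma cts_hR q : ctsAt q (fun a b => sh b). Proof. apply cts_compR. apply comp_le_norm. reflexivity. Qed.
Lemma cts_huR q : ctsAt q (fun a b => shu b). Proof. apply cts_compR. apply comp_le_norm. reflexivity. Qed.
Lemma cts_xR q : ctsAt q (fun a b => shxx b). Proof. apply cts_compR. apply comp_le_norm. reflexivity. Qed.
Lemma cts_zR q : ctsAt q (fun a b => shzz b). Proof. apply cts_compR. apply comp_le_norm. reflexivity. Qed.

Lemma cts_swap q f : ctsAt q f -> ctsAt q (fun a b => f b a).
Proof. intros F eps He. destruct (F eps He) as [d [Hd K]]. exists d. split; auto. Qed.
Lemma cts_LtoR q (f : st -> R) : ctsAt q (fun a b => f a) -> ctsAt q (fun a b => f b).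
Proof. intros F. apply (cts_swap q (fun a b => f a)). exact F. Qed.

Section Cont.
Variables (g eta lam : R) (q : st).
Hypotheses (Hg : 0 < g) (He : 0 < eta) (Hl : 0 < lam) (Hq : adm q).

Lemma cts_velL : ctsAt q (fun a b => vel a).
Proof. unfold vel. apply cts_div. pose proof (adm_h _ Hq); lra. apply cts_huL. apply cts_hL. Qed.
Lemma cts_sxL : ctsAt q (fun a b => sigxx a).
Proof. unfold sigxx. apply cts_div. pose proof (adm_h _ Hq); lra. apply cts_xL. apply cts_hL. Qed.
Lemma cts_szL : ctsAt q (fun a b => sigzz a).
Proof. unfold sigzz. apply cts_div. pose proof (adm_h _ Hq); lra. apply cts_zL. apply cts_hL. Qed.

Lemma cts_invhL : ctsAt q (fun a b => / sh a).
Proof. apply cts_inv. pose proof (adm_h _ Hq); lra. apply cts_hL. Qed.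

Ltac cc := repeat first
  [ apply cts_velL | apply cts_sxL | apply cts_szL | apply cts_invhL | apply cts_plus | apply cts_minus | apply cts_mult | apply cts_opp
  | apply cts_const | apply cts_hL | apply cts_huL | apply cts_xL | apply cts_zL
  | apply cts_velL | apply cts_sxL | apply cts_szL ].

Lemma cts_pow2 f : ctsAt q f -> ctsAt q (fun a b => f a b ^ 2).
Proof. intros F. apply (cts_ext q _ (fun a b => f a b * f a b)); auto. intros; ring. apply cts_mult; auto. Qed.

Lemma cts_PrL : ctsAt q (fun a b => Pr g eta lam a).
Proof. apply (cts_ext q _ (fun a b => g * (sh a * sh a) * (/ 2) + (eta / (2*lam)) * sh a * (sigzz a - sigxx a))); auto.
  intros; unfold Pr; field; lra. cc. Qed.
Lemma cts_dPsL : ctsAt q (fun a b => dPs g eta lam a).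
Proof. unfold dPs. cc. Qed.
Lemma cts_aspL : ctsAt q (fun a b => asp g eta lam a).
Proof. unfold asp. apply cts_sqrt. left; apply dPs_pos; auto. apply cts_dPsL. Qed.

Lemma cts_velR : ctsAt q (fun a b => vel b). Proof. apply (cts_LtoR q vel). apply cts_velL. Qed.
Lemma cts_PrR : ctsAt q (fun a b => Pr g eta lam b). Proof. apply (cts_LtoR q (Pr g eta lam)). apply cts_PrL. Qed.
Lemma cts_aspR : ctsAt q (fun a b => asp g eta lam b). Proof. apply (cts_LtoR q (asp g eta lam)). apply cts_aspL. Qed.

Lemma DD_qq : 0 < DD g eta lam q q. Proof. apply DD_pos; auto. Qed.

Lemma cts_DD : ctsAt q (fun a b => DD g eta lam a b).
Proof. unfold DD. apply cts_plus; apply cts_mult. apply cts_hL. apply cts_aspL. apply cts_hR. apply cts_aspR. Qed.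
Lemma cts_dd : ctsAt q (fun a b => dd a b).
Proof. unfold dd. apply cts_max0. apply cts_minus. apply cts_velL. apply cts_velR. Qed.
Lemma cts_pL : ctsAt q (fun a b => pL g eta lam a b).
Proof. unfold pL. apply cts_div. pose proof DD_qq; lra. apply cts_max0. apply cts_minus. apply cts_PrR. apply cts_PrL. apply cts_DD. Qed.
Lemma cts_pR : ctsAt q (fun a b => pR g eta lam a b).
Proof. unfold pR. apply cts_div. pose proof DD_qq; lra. apply cts_max0. apply cts_minus. apply cts_PrL. apply cts_PrR. apply cts_DD. Qed.

Lemma cts_cL : ctsAt q (fun a b => cL g eta lam a b).
Proof. apply (cts_ext q _ (fun a b => sh a * (asp g eta lam a + 2 * (dd a b + pL g eta lam a b)))); auto.
  apply cts_mult. apply cts_hL. apply cts_plus. apply cts_aspL. apply cts_mult. apply cts_const.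
  apply cts_plus. apply cts_dd. apply cts_pL. Qed.
Lemma cts_cR : ctsAt q (fun a b => cR g eta lam a b).
Proof. apply (cts_ext q _ (fun a b => sh b * (asp g eta lam b + 2 * (dd a b + pR g eta lam a b)))); auto.
  apply cts_mult. apply cts_hR. apply cts_plus. apply cts_aspR. apply cts_mult. apply cts_const.
  apply cts_plus. apply cts_dd. apply cts_pR. Qed.

Lemma dd_qq : dd q q = 0.
Proof. unfold dd. rewrite Rminus_diag_eq by auto. apply Rmax_left. lra. Qed.
Lemma pL_qq : pL g eta lam q q = 0.
Proof. unfold pL. rewrite Rminus_diag_eq by auto. rewrite Rmax_left by lra. unfold Rdiv; ring. Qed.
Lemma pR_qq : pR g eta lam q q = 0.
Proof. unfold pR. rewrite Rminus_diag_eq by auto. rewrite Rmax_left by lra. unfold Rdiv; ring. Qed.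
Lemma cL_qq : cL g eta lam q q = sh q * asp g eta lam q.
Proof. rewrite cL_eq, dd_qq, pL_qq. ring. Qed.
Lemma cR_qq : cR g eta lam q q = sh q * asp g eta lam q.
Proof. rewrite cR_eq, dd_qq, pR_qq. ring. Qed.
Lemma cLR_qq : 0 < cL g eta lam q q + cR g eta lam q q.
Proof. pose proof (cL_pos g eta lam q q Hg He Hl Hq Hq). pose proof (cR_pos g eta lam q q Hg He Hl Hq Hq). lra. Qed.

Lemma cts_ustar : ctsAt q (fun a b => ustar g eta lam a b).
Proof. unfold ustar. apply cts_div. pose proof cLR_qq; lra.
  apply cts_minus. apply cts_plus. apply cts_plus. apply cts_mult. apply cts_cL. apply cts_velL.
  apply cts_mult. apply cts_cR. apply cts_velR. apply cts_PrL. apply cts_PrR.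
  apply cts_plus. apply cts_cL. apply cts_cR. Qed.

Lemma cts_Sig1 : ctsAt q (fun a b => Sig1 g eta lam a b).
Proof. unfold Sig1. apply cts_minus. apply cts_velL. apply cts_div. pose proof (adm_h _ Hq); lra.
  apply cts_cL. apply cts_hL. Qed.
Lemma cts_Sig2 : ctsAt q (fun a b => Sig2 g eta lam a b).
Proof. unfold Sig2. apply cts_ustar. Qed.
Lemma cts_Sig3 : ctsAt q (fun a b => Sig3 g eta lam a b).
Proof. unfold Sig3. apply cts_plus. apply cts_velR. apply cts_div. pose proof (adm_h _ Hq); lra.
  apply cts_cR. apply cts_hR. Qed.

Lemma Sig1_qq : Sig1 g eta lam q q = vel q - asp g eta lam q.
Proof. unfold Sig1. rewrite cL_qq. pose proof (adm_h _ Hq). field. lra. Qed.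
Lemma Sig2_qq : Sig2 g eta lam q q = vel q.
Proof. unfold Sig2. apply ustar_self; auto. Qed.
Lemma Sig3_qq : Sig3 g eta lam q q = vel q + asp g eta lam q.
Proof. unfold Sig3. rewrite cR_qq. pose proof (adm_h _ Hq). field. lra. Qed.

Lemma viscosity_part eps : 0 < eps -> exists delta, 0 < delta /\
     forall ql qr, adm ql -> adm qr -> stdist ql q < delta -> stdist qr q < delta ->
       Rabs (Sig1 g eta lam ql qr - (vel q - asp g eta lam q)) < eps /\
       Rabs (Sig2 g eta lam ql qr - vel q) < eps /\
       Rabs (Sig3 g eta lam ql qr - (vel q + asp g eta lam q)) < eps.
Proof. intros Heps.
  pose proof (cts_Sig1 eps Heps) as A1. pose proof (cts_Sig2 eps Heps) as A2. pose proof (cts_Sig3 eps Heps) as A3.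
  cbv beta in A1, A2, A3. rewrite Sig1_qq in A1. rewrite Sig2_qq in A2. rewrite Sig3_qq in A3.
  exact (near_and _ _ _ A1 (near_and _ _ _ A2 A3)). Qed.
End Cont.

Section Speed.
Variables (g eta lam : R) (ql qr : st).
Hypotheses (Hg : 0 < g) (He : 0 < eta) (Hl : 0 < lam) (Hql : adm ql) (Hqr : adm qr).


Lemma Pdiff_bound : Rabs (Pr g eta lam qr - Pr g eta lam ql) <= (asp g eta lam ql + asp g eta lam qr) * DD g eta lam ql qr.
Proof.
  destruct (Pr_le g eta lam ql Hg He Hl Hql). destruct (Pr_le g eta lam qr Hg He Hl Hqr).
  rewrite <- (asp_sq g eta lam ql) in * by auto. rewrite <- (asp_sq g eta lam qr) in * by auto.
  pose proof (al_pos g eta lam ql Hg He Hl Hql). pose proof (ar_pos g eta lam qr Hg He Hl Hqr).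
  pose proof (adm_h _ Hql). pose proof (adm_h _ Hqr). unfold DD. set (al := asp g eta lam ql) in *. set (ar := asp g eta lam qr) in *.
  assert (sh ql * (al * al) + sh qr * (ar * ar) <= (al + ar) * (sh ql * al + sh qr * ar)).
  { assert (0 <= sh ql * al * ar) by (apply Rmult_le_pos; [apply Rmult_le_pos|]; lra).
    assert (0 <= sh qr * ar * al) by (apply Rmult_le_pos; [apply Rmult_le_pos|]; lra). nra. }
  unfold Rabs. destruct Rcase_abs; lra. Qed.

Lemma pL_bound : pL g eta lam ql qr <= asp g eta lam ql + asp g eta lam qr.
Proof. pose proof Pdiff_bound. pose proof (DD_pos g eta lam ql qr Hg He Hl Hql Hqr).
  unfold pL. apply (Rmult_le_reg_r (DD g eta lam ql qr)); auto. unfold Rdiv.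
  rewrite Rmult_assoc, Rinv_l by lra. rewrite Rmult_1_r. apply Rmax_lub. 
  pose proof (al_pos g eta lam ql Hg He Hl Hql). pose proof (ar_pos g eta lam qr Hg He Hl Hqr).
  set (al := asp g eta lam ql) in *. set (ar := asp g eta lam qr) in *. nra.
  pose proof (Rle_abs (Pr g eta lam qr - Pr g eta lam ql)). lra. Qed.
Lemma pR_bound : pR g eta lam ql qr <= asp g eta lam ql + asp g eta lam qr.
Proof. pose proof Pdiff_bound. pose proof (DD_pos g eta lam ql qr Hg He Hl Hql Hqr).
  unfold pR. apply (Rmult_le_reg_r (DD g eta lam ql qr)); auto. unfold Rdiv.
  rewrite Rmult_assoc, Rinv_l by lra. rewrite Rmult_1_r. apply Rmax_lub.
  pose proof (al_pos g eta lam ql Hg He Hl Hql). pose proof (ar_pos g eta lam qr Hg He Hl Hqr).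
  set (al := asp g eta lam ql) in *. set (ar := asp g eta lam qr) in *. nra.
  rewrite Rabs_minus_sym in H. pose proof (Rle_abs (Pr g eta lam ql - Pr g eta lam qr)). lra. Qed.

Lemma dd_bound : dd ql qr <= Rabs (vel ql) + Rabs (vel qr).
Proof. unfold dd. apply Rmax_lub. pose proof (Rabs_pos (vel ql)); pose proof (Rabs_pos (vel qr)); lra.
  pose proof (Rle_abs (vel ql)). pose proof (Rabs_pos (vel qr)). pose proof (Rle_abs (- vel qr)).
  rewrite Rabs_Ropp in H1. lra. Qed.

Lemma speed_bound : Aspeed g eta lam ql qr <= 3 * (Rabs (vel ql) + Rabs (vel qr) + asp g eta lam ql + asp g eta lam qr).
Proof.
  pose proof dd_bound. pose proof pL_bound. pose proof pR_bound. pose proof (dd_ge ql qr).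
  pose proof (pL_ge g eta lam ql qr Hg He Hl Hql Hqr). pose proof (pR_ge g eta lam ql qr Hg He Hl Hql Hqr).
  pose proof (al_pos g eta lam ql Hg He Hl Hql). pose proof (ar_pos g eta lam qr Hg He Hl Hqr).
  pose proof (adm_h _ Hql). pose proof (adm_h _ Hqr). set (al := asp g eta lam ql) in *. set (ar := asp g eta lam qr) in *.
  pose proof (Rabs_pos (vel ql)). pose proof (Rabs_pos (vel qr)).
  set (S := Rabs (vel ql) + Rabs (vel qr) + al + ar).
  assert (S1 : Sig1 g eta lam ql qr = vel ql - al - 2 * (dd ql qr + pL g eta lam ql qr)).
  { unfold Sig1. rewrite cL_eq. fold al. field. lra. }
  assert (S3 : Sig3 g eta lam ql qr = vel qr + ar + 2 * (dd ql qr + pR g eta lam ql qr)).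
  { unfold Sig3. rewrite cR_eq. fold ar. field. lra. }
  assert (B2 : Rabs (Sig2 g eta lam ql qr) <= 2 * S).
  { unfold Sig2. pose proof (ustar_l g eta lam ql qr Hg He Hl Hql Hqr) as U.
    pose proof (cL_pos g eta lam ql qr Hg He Hl Hql Hqr). pose proof (cR_pos g eta lam ql qr Hg He Hl Hql Hqr).
    pose proof (cLR_ge g eta lam ql qr Hg He Hl Hql Hqr). pose proof (DD_pos g eta lam ql qr Hg He Hl Hql Hqr).
    pose proof Pdiff_bound.
    set (c1 := cL g eta lam ql qr) in *. set (c2 := cR g eta lam ql qr) in *.
    assert (K : Rabs ((c2 * (vel qr - vel ql) + Pr g eta lam ql - Pr g eta lam qr) / (c1 + c2))
              <= Rabs (vel qr - vel ql) + (al + ar)).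
    { unfold Rdiv at 1. rewrite Rabs_mult, Rabs_inv. rewrite (Rabs_pos_eq (c1 + c2)) by lra.
      apply (Rmult_le_reg_r (c1 + c2)); [lra|]. unfold Rdiv. rewrite Rmult_assoc, Rinv_l by lra.
      rewrite Rmult_1_r.
      replace (c2 * (vel qr - vel ql) + Pr g eta lam ql - Pr g eta lam qr) with
        (c2 * (vel qr - vel ql) + - (Pr g eta lam qr - Pr g eta lam ql)) by ring.
      eapply Rle_trans. apply Rabs_triang. rewrite Rabs_Ropp, Rabs_mult, (Rabs_pos_eq c2) by lra.
      pose proof (Rabs_pos (vel qr - vel ql)). fold al ar in H15.
      assert (0 <= (al + ar) * (c1 + c2 - DD g eta lam ql qr)) by (apply Rmult_le_pos; lra).
      assert (0 <= Rabs (vel qr - vel ql) * c1) by (apply Rmult_le_pos; lra). nra. }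
    replace (ustar g eta lam ql qr) with (vel ql + (ustar g eta lam ql qr - vel ql)) by ring.
    rewrite U. eapply Rle_trans. apply Rabs_triang.
    assert (Rabs (vel qr - vel ql) <= Rabs (vel qr) + Rabs (vel ql)).
    { unfold Rminus. eapply Rle_trans. apply Rabs_triang. rewrite Rabs_Ropp. lra. }
    unfold S. lra. }
  assert (B1 : Rabs (Sig1 g eta lam ql qr) <= 3 * S).
  { rewrite S1. unfold Rabs at 1. destruct Rcase_abs.
    - pose proof (Rle_abs (- vel ql)). rewrite Rabs_Ropp in H11. unfold S. lra.
    - pose proof (Rle_abs (vel ql)). unfold S. lra. }
  assert (B3 : Rabs (Sig3 g eta lam ql qr) <= 3 * S).
  { rewrite S3. unfold Rabs at 1. destruct Rcase_abs.
    - pose proof (Rle_abs (- vel qr)). rewrite Rabs_Ropp in H11. unfold S. lra.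
    - pose proof (Rle_abs (vel qr)). unfold S. lra. }
  unfold Aspeed. apply Rmax_lub. auto. apply Rmax_lub. unfold S in *; lra. auto.
Qed.
End Speed.

Definition smallL q (f : st -> st -> R) := forall eps, 0 < eps -> near q (fun a b => Rabs (f a b) <= eps * stdist b a).
Definition Lip q (f : st -> st -> R) := exists L, 0 <= L /\ near q (fun a b => Rabs (f a b) <= L * stdist b a).

Lemma stdist_ge0 a b : 0 <= stdist a b. Proof. apply norm_ge0. Qed.

Lemma bnd_of_cts q f : ctsAt q f -> exists M, 0 <= M /\ near q (fun a b => Rabs (f a b) <= M).
Proof. intros F. exists (Rabs (f q q) + 1). split. pose proof (Rabs_pos (f q q)); lra.
  apply (near_mono q _ _ (F 1 ltac:(lra))). intros a b _ _ H.
  replace (f a b) with (f q q + (f a b - f q q)) by ring. eapply Rle_trans. apply Rabs_triang. lra. Qed.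

Lemma smallL_mul q a b : ctsAt q a -> a q q = 0 -> Lip q b -> smallL q (fun x y => a x y * b x y).
Proof. intros A A0 [L [HL B]] eps He.
  set (e' := eps / (L + 1)).
  assert (He' : 0 < e') by (unfold e', Rdiv; apply Rmult_lt_0_compat; [lra|apply Rinv_0_lt_compat; lra]).
  apply (near_mono q _ _ (near_and _ _ _ (A e' He') B)). intros x y _ _ [H1 H2].
  rewrite A0, Rminus_0_r in H1. rewrite Rabs_mult.
  pose proof (stdist_ge0 y x). pose proof (Rabs_pos (a x y)). pose proof (Rabs_pos (b x y)).
  assert (Rabs (a x y) * Rabs (b x y) <= e' * (L * stdist y x)) by (apply Rmult_le_compat; lra).
  assert (e' * (L * stdist y x) <= eps * stdist y x).
  { assert (e' * L <= eps).
    { unfold e'. apply (Rmult_le_reg_r (L+1)); [lra|]. unfold Rdiv.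
      replace (eps * / (L + 1) * L * (L + 1)) with (eps * L) by (field; lra). nra. }
    nra. }
  lra. Qed.

Lemma smallL_plus q f g : smallL q f -> smallL q g -> smallL q (fun a b => f a b + g a b).
Proof. intros F G eps He. apply (near_mono q _ _ (near_and _ _ _ (F (eps/2) ltac:(lra)) (G (eps/2) ltac:(lra)))).
  intros a b _ _ [H1 H2]. eapply Rle_trans. apply Rabs_triang. lra. Qed.

Lemma smallL_ext q f f' : (forall a b, adm a -> adm b -> f a b = f' a b) -> smallL q f' -> smallL q f.
Proof. intros E F eps He. apply (near_mono q _ _ (F eps He)). intros a b Ha Hb H. rewrite E; auto. Qed.

Lemma Lip_plus q f g : Lip q f -> Lip q g -> Lip q (fun a b => f a b + g a b).
Proof. intros [L1 [H1 F]] [L2 [H2 G]]. exists (L1 + L2). split. lra.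
  apply (near_mono q _ _ (near_and _ _ _ F G)). intros a b _ _ [K1 K2].
  eapply Rle_trans. apply Rabs_triang. lra. Qed.

Lemma Lip_cmul q c f : ctsAt q c -> Lip q f -> Lip q (fun a b => c a b * f a b).
Proof. intros C [L [HL F]]. destruct (bnd_of_cts q c C) as [M [HM B]].
  exists (M * L). split. nra.
  apply (near_mono q _ _ (near_and _ _ _ B F)). intros a b _ _ [K1 K2].
  rewrite Rabs_mult. pose proof (Rabs_pos (c a b)). pose proof (Rabs_pos (f a b)). pose proof (stdist_ge0 b a).
  assert (Rabs (c a b) * Rabs (f a b) <= M * (L * stdist b a)) by (apply Rmult_le_compat; lra). lra. Qed.

Lemma Lip_ext q f f' : (forall a b, adm a -> adm b -> f a b = f' a b) -> Lip q f' -> Lip q f.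
Proof. intros E [L [HL F]]. exists L. split; auto. apply (near_mono q _ _ F). intros a b Ha Hb H. rewrite E; auto. Qed.

Lemma Lip_comp q (comp : st -> R) : (forall p, Rabs (comp p) <= stnorm p) ->
  (forall a b, comp (stsub a b) = comp a - comp b) -> Lip q (fun a b => comp b - comp a).
Proof. intros Hc Hs. exists 1. split. lra. exists 1. split. lra. intros a b _ _ _ _.
  rewrite <- Hs. rewrite Rmult_1_l. apply Hc. Qed.

Lemma Lip_h q : Lip q (fun a b => sh b - sh a). Proof. apply Lip_comp. apply comp_le_norm. reflexivity. Qed.
Lemma Lip_hu q : Lip q (fun a b => shu b - shu a). Proof. apply Lip_comp. apply comp_le_norm. reflexivity. Qed.
Lemma Lip_x q : Lip q (fun a b => shxx b - shxx a). Proof. apply Lip_comp. apply comp_le_norm. reflexivity. Qed.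
Lemma Lip_z q : Lip q (fun a b => shzz b - shzz a). Proof. apply Lip_comp. apply comp_le_norm. reflexivity. Qed.

Section Cons.
Variables (g eta lam : R) (q : st).
Hypotheses (Hg : 0 < g) (He : 0 < eta) (Hl : 0 < lam) (Hq : adm q).

Lemma h_nz : sh q <> 0. Proof. pose proof (adm_h _ Hq); lra. Qed.

Lemma Lip_vel : Lip q (fun a b => vel b - vel a).
Proof.
  apply (Lip_ext q _ (fun a b => / sh b * (shu b - shu a) + (- shu a / (sh a * sh b)) * (sh b - sh a))).
  { intros a b Ha Hb. pose proof (adm_h _ Ha). pose proof (adm_h _ Hb). unfold vel. field. lra. }
  apply Lip_plus; apply Lip_cmul.
  - apply (cts_LtoR q (fun x => / sh x)). apply cts_invhL; auto.
  - apply Lip_hu.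
  - apply cts_div. pose proof h_nz. apply Rmult_integral_contrapositive; auto.
    apply cts_opp. apply cts_huL. apply cts_mult. apply cts_hL. apply cts_hR.
  - apply Lip_h.
Qed.

Lemma Lip_P : Lip q (fun a b => Pr g eta lam b - Pr g eta lam a).
Proof.
  apply (Lip_ext q _ (fun a b => (g / 2 * (sh a + sh b)) * (sh b - sh a) + (eta/(2*lam)) * (shzz b - shzz a)
      + (- (eta/(2*lam))) * (shxx b - shxx a))).
  { intros a b Ha Hb. pose proof (adm_h _ Ha). pose proof (adm_h _ Hb). unfold Pr, sigxx, sigzz. field. lra. }
  apply Lip_plus. apply Lip_plus.
  - apply Lip_cmul. apply cts_mult. apply cts_const. apply cts_plus. apply cts_hL. apply cts_hR. apply Lip_h.
  - apply Lip_cmul. apply cts_const. apply Lip_z.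
  - apply Lip_cmul. apply cts_const. apply Lip_x.
Qed.

Lemma cts_cLR_div1 : ctsAt q (fun a b => cR g eta lam a b / (cL g eta lam a b + cR g eta lam a b)).
Proof. apply cts_div. pose proof (cLR_qq g eta lam q Hg He Hl Hq). lra.
  apply cts_cR; auto. apply cts_plus. apply cts_cL; auto. apply cts_cR; auto. Qed.
Lemma cts_cLR_div2 : ctsAt q (fun a b => cL g eta lam a b / (cL g eta lam a b + cR g eta lam a b)).
Proof. apply cts_div. pose proof (cLR_qq g eta lam q Hg He Hl Hq). lra.
  apply cts_cL; auto. apply cts_plus. apply cts_cL; auto. apply cts_cR; auto. Qed.
Lemma cts_cLR_inv : ctsAt q (fun a b => / (cL g eta lam a b + cR g eta lam a b)).
Proof. apply cts_inv. pose proof (cLR_qq g eta lam q Hg He Hl Hq). lra.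
  apply cts_plus. apply cts_cL; auto. apply cts_cR; auto. Qed.

Lemma Lip_usl : Lip q (fun a b => ustar g eta lam a b - vel a).
Proof.
  apply (Lip_ext q _ (fun a b => (cR g eta lam a b / (cL g eta lam a b + cR g eta lam a b)) * (vel b - vel a)
     + (- / (cL g eta lam a b + cR g eta lam a b)) * (Pr g eta lam b - Pr g eta lam a))).
  { intros a b Ha Hb. rewrite ustar_l by auto. pose proof (cL_pos g eta lam a b Hg He Hl Ha Hb).
    pose proof (cR_pos g eta lam a b Hg He Hl Ha Hb). field. lra. }
  apply Lip_plus; apply Lip_cmul. apply cts_cLR_div1. apply Lip_vel.
  apply cts_opp. apply cts_cLR_inv. apply Lip_P. Qed.

Lemma Lip_usr : Lip q (fun a b => vel b - ustar g eta lam a b).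
Proof.
  apply (Lip_ext q _ (fun a b => (cL g eta lam a b / (cL g eta lam a b + cR g eta lam a b)) * (vel b - vel a)
     + (/ (cL g eta lam a b + cR g eta lam a b)) * (Pr g eta lam b - Pr g eta lam a))).
  { intros a b Ha Hb. rewrite ustar_r by auto. pose proof (cL_pos g eta lam a b Hg He Hl Ha Hb).
    pose proof (cR_pos g eta lam a b Hg He Hl Ha Hb). field. lra. }
  apply Lip_plus; apply Lip_cmul. apply cts_cLR_div2. apply Lip_vel.
  apply cts_cLR_inv. apply Lip_P. Qed.

End Cons.

Section Cons2.
Variables (g eta lam : R) (q : st).
Hypotheses (Hg : 0 < g) (He : 0 < eta) (Hl : 0 < lam) (Hq : adm q).

Lemma hLs_qq : hLstar g eta lam q q = sh q.
Proof. apply inv_eq_h. apply hLs_pos; auto. apply adm_h; auto.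
  rewrite invhL by auto. rewrite ustar_self by auto. unfold Rminus. rewrite Rplus_opp_r. unfold Rdiv. ring. Qed.
Lemma hRs_qq : hRstar g eta lam q q = sh q.
Proof. apply inv_eq_h. apply hRs_pos; auto. apply adm_h; auto.
  rewrite invhR by auto. rewrite ustar_self by auto. unfold Rminus. rewrite Rplus_opp_r. unfold Rdiv. ring. Qed.

Lemma cts_hLs : ctsAt q (fun a b => hLstar g eta lam a b).
Proof. unfold hLstar. apply cts_inv.
  - rewrite <- (Rinv_inv (/ sh q + _)). fold (hLstar g eta lam q q). rewrite hLs_qq.
    apply Rinv_neq_0_compat. apply h_nz; auto.
  - apply cts_plus. apply cts_invhL; auto. apply cts_div.
    + pose proof (cL_pos g eta lam q q Hg He Hl Hq Hq). pose proof (cLR_qq g eta lam q Hg He Hl Hq).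
      apply Rmult_integral_contrapositive; split; lra.
    + apply cts_minus. apply cts_plus. apply cts_mult. apply cts_cR; auto. apply cts_minus.
      apply cts_velR; auto. apply cts_velL; auto. apply cts_PrL; auto. apply cts_PrR; auto.
    + apply cts_mult. apply cts_cL; auto. apply cts_plus. apply cts_cL; auto. apply cts_cR; auto.
Qed.
Lemma cts_hRs : ctsAt q (fun a b => hRstar g eta lam a b).
Proof. unfold hRstar. apply cts_inv.
  - rewrite <- (Rinv_inv (/ sh q + _)). fold (hRstar g eta lam q q). rewrite hRs_qq.
    apply Rinv_neq_0_compat. apply h_nz; auto.
  - apply cts_plus. apply (cts_LtoR q (fun x => / sh x)). apply cts_invhL; auto. apply cts_div.
    + pose proof (cR_pos g eta lam q q Hg He Hl Hq Hq). pose proof (cLR_qq g eta lam q Hg He Hl Hq).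
      apply Rmult_integral_contrapositive; split; lra.
    + apply cts_minus. apply cts_plus. apply cts_mult. apply cts_cL; auto. apply cts_minus.
      apply cts_velR; auto. apply cts_velL; auto. apply cts_PrR; auto. apply cts_PrL; auto.
    + apply cts_mult. apply cts_cR; auto. apply cts_plus. apply cts_cL; auto. apply cts_cR; auto.
Qed.

Lemma cts_tl : ctsAt q (fun a b => sh a / hLstar g eta lam a b).
Proof. apply cts_div. rewrite hLs_qq. apply h_nz; auto. apply cts_hL. apply cts_hLs. Qed.
Lemma cts_tr : ctsAt q (fun a b => sh b / hRstar g eta lam a b).
Proof. apply cts_div. rewrite hRs_qq. apply h_nz; auto. apply cts_hR. apply cts_hRs. Qed.
Lemma tl_qq : sh q / hLstar g eta lam q q = 1.
Proof. rewrite hLs_qq. field. apply h_nz; auto. Qed.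
Lemma tr_qq : sh q / hRstar g eta lam q q = 1.
Proof. rewrite hRs_qq. field. apply h_nz; auto. Qed.

Definition comp3 a b := shxx (FluxR g eta lam a b) - shxx (FluxL g eta lam a b)
  + (-2 * sigxx q * ((shu b - shu a) - vel q * (sh b - sh a))).
Definition comp4 a b := shzz (FluxR g eta lam a b) - shzz (FluxL g eta lam a b)
  + (2 * sigzz q * ((shu b - shu a) - vel q * (sh b - sh a))).

Lemma comp3_id a b : adm a -> adm b -> comp3 a b =
   (shxx a * (sh a / hLstar g eta lam a b + 1) - 2 * shxx q) * (ustar g eta lam a b - vel a)
 + (shxx b * (sh b / hRstar g eta lam a b + 1) - 2 * shxx q) * (vel b - ustar g eta lam a b)
 + (-2 * sigxx q * (vel b - vel q)) * (sh b - sh a)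
 + (-2 * sigxx q * (sh a - sh q)) * (vel b - vel a).
Proof. intros Ha Hb. unfold comp3.
  rewrite FR_x, FL_x. pose proof (LRsum g eta lam shxx a b) as LR.
  assert (T : shxx b * vel b - Rsum g eta lam shxx a b - (shxx a * vel a + Lsum g eta lam shxx a b)
     = shxx b * vel b - shxx a * vel a - Tsum g eta lam shxx a b) by lra. rewrite T. clear T LR.
  pose proof (adm_h _ Ha). pose proof (adm_h _ Hb).
  pose proof (hLs_pos g eta lam a b Hg He Hl Ha Hb). pose proof (hRs_pos g eta lam a b Hg He Hl Ha Hb).
  pose proof (cL_pos g eta lam a b Hg He Hl Ha Hb). pose proof (cR_pos g eta lam a b Hg He Hl Ha Hb).
  assert (X1 : shxx (qLstar g eta lam a b) = shxx a * sh a / hLstar g eta lam a b).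
  { simpl. unfold sigxx. field. lra. }
  assert (X2 : shxx (qRstar g eta lam a b) = shxx b * sh b / hRstar g eta lam a b).
  { simpl. unfold sigxx. field. lra. }
  pose proof (Qx_l (shxx a) (sh a) (vel a) (hLstar g eta lam a b) (ustar g eta lam a b) (cL g eta lam a b)
     H H1 H3 (invhL g eta lam a b Hg He Hl Ha Hb)) as QL.
  pose proof (Qx_r (shxx b) (sh b) (vel b) (hRstar g eta lam a b) (ustar g eta lam a b) (cR g eta lam a b)
     H0 H2 H4 (invhR g eta lam a b Hg He Hl Ha Hb)) as QR.
  unfold Tsum. rewrite X1, X2. unfold Sig1, Sig2, Sig3.
  assert (Eq : shxx q = sh q * sigxx q) by (unfold sigxx; field; apply h_nz; auto).
  rewrite (shu_eq a Ha), (shu_eq b Hb), Eq.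
  set (us := ustar g eta lam a b) in *.
  set (Xa := shxx a) in *. set (Xb := shxx b) in *.
  set (hsl := hLstar g eta lam a b) in *. set (hsr := hRstar g eta lam a b) in *.
  set (c1 := cL g eta lam a b) in *. set (c2 := cR g eta lam a b) in *.
  transitivity (((Xa * sh a / hsl) * us - Xa * vel a - (vel a - c1 / sh a) * (Xa * sh a / hsl - Xa))
     + (Xb * vel b - (Xb * sh b / hsr) * us - (vel b + c2 / sh b) * (Xb - Xb * sh b / hsr))
     - 2 * sigxx q * (sh b * vel b - sh a * vel a - vel q * (sh b - sh a))).
  { unfold Rdiv. ring. }
  rewrite QL, QR. unfold Rdiv. ring. Qed.

Lemma comp4_id a b : adm a -> adm b -> comp4 a b =
   (- (shzz a * (sh a / hLstar g eta lam a b + 1) / (sh a / hLstar g eta lam a b)^2) + 2 * shzz q) * (ustar g eta lam a b - vel a)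
 + (- (shzz b * (sh b / hRstar g eta lam a b + 1) / (sh b / hRstar g eta lam a b)^2) + 2 * shzz q) * (vel b - ustar g eta lam a b)
 + (2 * sigzz q * (vel b - vel q)) * (sh b - sh a)
 + (2 * sigzz q * (sh a - sh q)) * (vel b - vel a).
Proof. intros Ha Hb. unfold comp4.
  rewrite FR_z, FL_z. pose proof (LRsum g eta lam shzz a b) as LR.
  assert (T : shzz b * vel b - Rsum g eta lam shzz a b - (shzz a * vel a + Lsum g eta lam shzz a b)
     = shzz b * vel b - shzz a * vel a - Tsum g eta lam shzz a b) by lra. rewrite T. clear T LR.
  pose proof (adm_h _ Ha). pose proof (adm_h _ Hb).
  pose proof (hLs_pos g eta lam a b Hg He Hl Ha Hb). pose proof (hRs_pos g eta lam a b Hg He Hl Ha Hb).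
  pose proof (cL_pos g eta lam a b Hg He Hl Ha Hb). pose proof (cR_pos g eta lam a b Hg He Hl Ha Hb).
  assert (X1 : shzz (qLstar g eta lam a b) = shzz a * (hLstar g eta lam a b / sh a)^3).
  { simpl. unfold sigzz. field. lra. }
  assert (X2 : shzz (qRstar g eta lam a b) = shzz b * (hRstar g eta lam a b / sh b)^3).
  { simpl. unfold sigzz. field. lra. }
  pose proof (Qz_l (shzz a) (sh a) (vel a) (hLstar g eta lam a b) (ustar g eta lam a b) (cL g eta lam a b)
     H H1 H3 (invhL g eta lam a b Hg He Hl Ha Hb)) as QL.
  pose proof (Qz_r (shzz b) (sh b) (vel b) (hRstar g eta lam a b) (ustar g eta lam a b) (cR g eta lam a b)
     H0 H2 H4 (invhR g eta lam a b Hg He Hl Ha Hb)) as QR.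
  unfold Tsum. rewrite X1, X2. unfold Sig1, Sig2, Sig3.
  assert (Eq : shzz q = sh q * sigzz q) by (unfold sigzz; field; apply h_nz; auto).
  rewrite (shu_eq a Ha), (shu_eq b Hb), Eq.
  set (us := ustar g eta lam a b) in *.
  set (Xa := shzz a) in *. set (Xb := shzz b) in *.
  set (hsl := hLstar g eta lam a b) in *. set (hsr := hRstar g eta lam a b) in *.
  set (c1 := cL g eta lam a b) in *. set (c2 := cR g eta lam a b) in *.
  set (tl := sh a / hsl) in *. set (tr := sh b / hsr) in *.
  transitivity (((Xa * (hsl / sh a)^3) * us - Xa * vel a - (vel a - c1 / sh a) * (Xa * (hsl / sh a)^3 - Xa))
     + (Xb * vel b - (Xb * (hsr / sh b)^3) * us - (vel b + c2 / sh b) * (Xb - Xb * (hsr / sh b)^3))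
     + 2 * sigzz q * (sh b * vel b - sh a * vel a - vel q * (sh b - sh a))).
  { unfold Rdiv. ring. }
  rewrite QL, QR. unfold Rdiv. ring. Qed.

End Cons2.

Section Cons3.
Variables (g eta lam : R) (q : st).
Hypotheses (Hg : 0 < g) (He : 0 < eta) (Hl : 0 < lam) (Hq : adm q).

Lemma small3 : smallL q (comp3 g eta lam q).
Proof.
  eapply smallL_ext. intros a b Ha Hb. apply comp3_id; auto.
  repeat apply smallL_plus; apply smallL_mul.
  - apply cts_minus. apply cts_mult. apply cts_xL. apply cts_plus. apply cts_tl; auto. apply cts_const. apply cts_const.
  - cbv beta. rewrite tl_qq by auto. ring.
  - apply Lip_usl; auto.
  - apply cts_minus. apply cts_mult. apply cts_xR. apply cts_plus. apply cts_tr; auto. apply cts_const. apply cts_const.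
  - cbv beta. rewrite tr_qq by auto. ring.
  - apply Lip_usr; auto.
  - apply cts_mult. apply cts_const. apply cts_minus. apply cts_velR; auto. apply cts_const.
  - cbv beta. ring.
  - apply Lip_h.
  - apply cts_mult. apply cts_const. apply cts_minus. apply cts_hL. apply cts_const.
  - cbv beta. ring.
  - apply Lip_vel; auto.
Qed.

Lemma small4 : smallL q (comp4 g eta lam q).
Proof.
  eapply smallL_ext. intros a b Ha Hb. apply comp4_id; auto.
  repeat apply smallL_plus; apply smallL_mul.
  - apply cts_plus. apply cts_opp. apply cts_div.
    + rewrite tl_qq by auto. lra.
    + apply cts_mult. apply cts_zL. apply cts_plus. apply cts_tl; auto. apply cts_const.
    + apply cts_pow2; auto. apply cts_tl; auto.
    + apply cts_const.
  - cbv beta. rewrite tl_qq by auto. field.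
  - apply Lip_usl; auto.
  - apply cts_plus. apply cts_opp. apply cts_div.
    + rewrite tr_qq by auto. lra.
    + apply cts_mult. apply cts_zR. apply cts_plus. apply cts_tr; auto. apply cts_const.
    + apply cts_pow2; auto. apply cts_tr; auto.
    + apply cts_const.
  - cbv beta. rewrite tr_qq by auto. field.
  - apply Lip_usr; auto.
  - apply cts_mult. apply cts_const. apply cts_minus. apply cts_velR; auto. apply cts_const.
  - cbv beta. ring.
  - apply Lip_h.
  - apply cts_mult. apply cts_const. apply cts_minus. apply cts_hL. apply cts_const.
  - cbv beta. ring.
  - apply Lip_vel; auto.
Qed.

Lemma Flux_self_L : FluxL g eta lam q q = Fphys g eta lam q.
Proof.
  assert (L0 : forall phi, Lsum g eta lam phi q q = 0).
  { intros. unfold Lsum. rewrite qLstar_eq, qRstar_eq by (auto; apply ustar_self; auto). ring. }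
  pose proof (FL_h g eta lam q q Hg He Hl Hq Hq) as E1. pose proof (FL_hu g eta lam q q Hg He Hl Hq Hq) as E2.
  pose proof (FL_x g eta lam q q) as E3. pose proof (FL_z g eta lam q q) as E4.
  rewrite L0 in E1, E2, E3, E4.
  destruct (FluxL g eta lam q q) as [a b c d]. simpl in *. unfold Fphys. f_equal; lra. Qed.

Lemma Flux_self_R : FluxR g eta lam q q = Fphys g eta lam q.
Proof.
  assert (R0 : forall phi, Rsum g eta lam phi q q = 0).
  { intros. unfold Rsum. rewrite qLstar_eq, qRstar_eq by (auto; apply ustar_self; auto). ring. }
  pose proof (FR_h g eta lam q q Hg He Hl Hq Hq) as E1. pose proof (FR_hu g eta lam q q Hg He Hl Hq Hq) as E2.
  pose proof (FR_x g eta lam q q) as E3. pose proof (FR_z g eta lam q q) as E4.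
  rewrite R0 in E1, E2, E3, E4.
  destruct (FluxR g eta lam q q) as [a b c d]. simpl in *. unfold Fphys. f_equal; lra. Qed.

End Cons3.

Lemma consistent_part g eta lam : 0 < g -> 0 < eta -> 0 < lam -> consistent g eta lam.
Proof.
  intros Hg He Hl q Hq. split; [apply Flux_self_L; auto|]. split; [apply Flux_self_R; auto|].
  intros eps Heps.
  destruct (near_and _ _ _ (small3 g eta lam q Hg He Hl Hq eps Heps) (small4 g eta lam q Hg He Hl Hq eps Heps))
    as [d [Hd K]].
  exists d. split; auto. intros ql qr Hql Hqr H1 H2. destruct (K ql qr Hql Hqr H1 H2) as [K3 K4].
  unfold comp3, comp4 in *.
  pose proof (stdist_ge0 qr ql).
  unfold stnorm, stadd, stsub, Bmat. simpl.
  replace (Fh g eta lam ql qr - Fh g eta lam ql qr + 0) with 0 by ring.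
  replace (Fhu g eta lam ql qr - Fhu g eta lam ql qr + 0) with 0 by ring.
  rewrite Rabs_R0.
  assert (0 <= eps * stdist qr ql) by (apply Rmult_le_pos; lra).
  simpl in K3, K4.
  repeat apply Rmax_lub; auto.
Qed.

Theorem theorem1 :
  exists C : R,
  forall g eta lam : R, 0 < g -> 0 < eta -> 0 < lam ->
  (* (i) consistency *)
  consistent g eta lam /\
  (* (ii) positivity *)
  (forall (dt : R) (dx : Z -> R) (qn : Z -> st),
     0 < dt -> (forall i, 0 < dx i) -> (forall i, adm (qn i)) ->
     CFL g eta lam dt dx qn ->
     forall i, adm (scheme g eta lam dt dx qn i)) /\
  (* (iii) conservativity in h and hu *)
  (forall ql qr : st,
     sh (FluxL g eta lam ql qr) = sh (FluxR g eta lam ql qr) /\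
     shu (FluxL g eta lam ql qr) = shu (FluxR g eta lam ql qr)) /\
  (* (iv) discrete energy inequality *)
  (exists Gnum : st -> st -> R,
     (forall q, adm q -> Gnum q q = Gflux g eta lam q) /\
     (forall (dt : R) (dx : Z -> R) (qn : Z -> st),
        0 < dt -> (forall i, 0 < dx i) -> (forall i, adm (qn i)) ->
        CFL g eta lam dt dx qn ->
        forall i,
          Energy g eta lam (scheme g eta lam dt dx qn i) - Energy g eta lam (qn i)
          + dt / dx i * (Gnum (qn i) (qn (i + 1)%Z) - Gnum (qn (i - 1)%Z) (qn i)) <= 0)) /\
  (* (v) maximum principle on s_xx, minimum principle on s_zz *)
  (forall (dt : R) (dx : Z -> R) (qn : Z -> st) (k : R),
     0 < dt -> (forall i, 0 < dx i) -> (forall i, adm (qn i)) ->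
     CFL g eta lam dt dx qn -> 0 < k ->
     ((forall i, sxx (qn i) <= k) -> forall i, sxx (scheme g eta lam dt dx qn i) <= k) /\
     ((forall i, k <= szz (qn i)) -> forall i, k <= szz (scheme g eta lam dt dx qn i))) /\
  (* (vi) steady contact discontinuities are exactly resolved *)
  (forall (dt : R) (dx : Z -> R) (qn : Z -> st),
     0 < dt -> (forall i, 0 < dx i) -> (forall i, adm (qn i)) ->
     CFL g eta lam dt dx qn ->
     (forall i, vel (qn i) = 0) ->
     (forall i j, Pr g eta lam (qn i) = Pr g eta lam (qn j)) ->
     forall i, scheme g eta lam dt dx qn i = qn i) /\
  (* (vii) finite numerical propagation speed, with an absolute constant C *)
  (forall ql qr, adm ql -> adm qr ->
     Aspeed g eta lam ql qr
       <= C * (Rabs (vel ql) + Rabs (vel qr) + asp g eta lam ql + asp g eta lam qr)) /\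
  (* (viii) sharp numerical viscosity *)
  (forall q, adm q -> forall eps, 0 < eps -> exists delta, 0 < delta /\
     forall ql qr, adm ql -> adm qr -> stdist ql q < delta -> stdist qr q < delta ->
       Rabs (Sig1 g eta lam ql qr - (vel q - asp g eta lam q)) < eps /\
       Rabs (Sig2 g eta lam ql qr - vel q) < eps /\
       Rabs (Sig3 g eta lam ql qr - (vel q + asp g eta lam q)) < eps).
Proof.
  exists 3. intros g eta lam Hg He Hl.
  split. apply consistent_part; auto.
  split. intros dt dx qn Hdt Hdx Hadm Hcfl i. eapply pos_part; eauto.
  split. intros; split; reflexivity.
  split. exists (Gnum g eta lam). split.
    intros q Hq. apply Gnum_self; auto.
    intros dt dx qn Hdt Hdx Hadm Hcfl i. eapply energy_part; eauto.
  split. intros dt dx qn k Hdt Hdx Hadm Hcfl Hk. eapply maxp_part; eauto.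
  split. intros dt dx qn Hdt Hdx Hadm Hcfl Hv HP. eapply steady_part; eauto.
  split. intros ql qr Hql Hqr. apply speed_bound; auto.
  intros q Hq eps Heps. apply viscosity_part; auto.
Qed.
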